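(* Let $g\in C^{\omega}(\mathbb{R})$ satisfy (G). Suppose $X_{\rm toy}\neq\emptyset$. If $\beta\in X_{\rm toy}$, then the toy tip solution $(\rho_\beta,r_\beta)$ is a toy steady tip growth solution.
   Context: Condition (G) on real-analytic $g:\mathbb{R}\to\mathbb{R}$: $g(v)>0$, $g'(v)\ge0$, $\frac{d^2}{dv^2}(v^2g(v^2))>0$ for all $v>0$, and $\lim_{v\to\infty}v g(v^2)=\infty$. Toy model: $\rho'=\frac32\frac{1-\rho^2}{r}\Big(-1+\frac{\sqrt{1-\rho^2}(\beta r^2g(r^2)+\rho)}{r}\Big)$, $r'=\rho$ (prime $=d/ds$) on $M_0=(-1,1)\times\mathbb{R}_{>0}$. For a solution on $(0,s_{\max})$: (S1) $\lim_{s\to0^+}\rho=1$, $\lim r=0$, $\lim\sqrt{1-\rho^2}/r=\eta_0>0$; (S2) there exist $s_0>0$ and real-analytic $G:(-a,a)\to\mathbb{R}_{>0}$, $a=r(s_0)^2$, with $\rho(s)=G(r(s)^2)$ on $(0,s_0)$; (S3) defined on $(0,\infty)$ with $\rho'<0,\rho>0$ for all $s>0$; (S4) $\lim_{s\to\infty}\rho=0$, $\lim_{s\to\infty} r=r_\infty>0$. A toy steady tip growth solution satisfies (S1)–(S4). A toy tip solution satisfies (S1), (S2) and $\rho'<0,\rho>0$ on some $(0,s_0)$, $s_0>0$. For each $\beta\ge0$ there is a unique maximal toy tip solution, denoted $(\rho_\beta,r_\beta)$. Sets: $A_{\rm toy}=\{\beta>0:\exists s_0>0,\ \rho_\beta(s)\rho_\beta'(s)<0\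 \forall s\in(0,s_0),\ \rho_\beta(s_0)=0\}$; $B_{\rm toy}=\{\beta>0:\exists s_0>0,\ \rho_\beta(s)\rho_\beta'(s)<0\ \forall s\in(0,s_0),\ \rho_\beta'(s_0)=0\}$; $X_{\rm toy}=\mathbb{R}_{>0}\setminus(A_{\rm toy}\cup B_{\rm toy})$. *)

(* Defs.v *)
From Stdlib Require Import Reals Lra.
Open Scope R_scope.

Definition analytic_on (P : R -> Prop) (f : R -> R) : Prop :=
  forall x0, P x0 ->
    exists rad, 0 < rad /\
    exists a : nat -> R,
      forall x, Rabs (x - x0) < rad -> P x ->
        infinite_sum (fun n => a n * (x - x0) ^ n) (f x).

Definition second_deriv_at (f : R -> R) (v l : R) : Prop :=
  exists f1 : R -> R,
    (exists eps, 0 < eps /\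
       forall w, Rabs (w - v) < eps -> derivable_pt_lim f w (f1 w)) /\
    derivable_pt_lim f1 v l.

Definition condG (g : R -> R) : Prop :=
  (forall v, 0 < v -> 0 < g v) /\
  (forall v, 0 < v -> exists l, derivable_pt_lim g v l /\ 0 <= l) /\
  (forall v, 0 < v -> exists l,
       second_deriv_at (fun w => w ^ 2 * g (w ^ 2)) v l /\ 0 < l) /\
  (forall M, exists V, forall v, V < v -> M < v * g (v ^ 2)).

Definition toyF (g : R -> R) (beta rho r : R) : R :=
  3 / 2 * (1 - rho ^ 2) / r *
  (-1 + sqrt (1 - rho ^ 2) * (beta * r ^ 2 * g (r ^ 2) + rho) / r).

(** Right endpoint s_max of the existence interval: [Some m] = m, [None] = +infinity. *)
Definition in_dom (smax : option R) (s : R) : Prop :=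
  0 < s /\ match smax with Some m => s < m | None => True end.

Definition toy_solution (g : R -> R) (beta : R) (rho r : R -> R)
    (smax : option R) : Prop :=
  forall s, in_dom smax s ->
    -1 < rho s < 1 /\ 0 < r s /\
    derivable_pt_lim rho s (toyF g beta (rho s) (r s)) /\
    derivable_pt_lim r s (rho s).

Definition lim_0plus (f : R -> R) (L : R) : Prop :=
  forall eps, 0 < eps -> exists delta, 0 < delta /\
    forall s, 0 < s < delta -> Rabs (f s - L) < eps.

Definition lim_infty (f : R -> R) (L : R) : Prop :=
  forall eps, 0 < eps -> exists S, forall s, S < s -> Rabs (f s - L) < eps.

Definition S1 (rho r : R -> R) : Prop :=
  lim_0plus rho 1 /\ lim_0plus r 0 /\
  exists eta0, 0 < eta0 /\ lim_0plus (fun s => sqrt (1 - rho s ^ 2) / r s) eta0.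

Definition S2 (rho r : R -> R) (smax : option R) : Prop :=
  exists s0, in_dom smax s0 /\
    let a := r s0 ^ 2 in
    exists G : R -> R,
      analytic_on (fun x => - a < x < a) G /\
      (forall x, - a < x < a -> 0 < G x) /\
      (forall s, 0 < s < s0 -> rho s = G (r s ^ 2)).

Definition S3 (rho r : R -> R) (smax : option R) : Prop :=
  smax = None /\
  forall s, 0 < s ->
    (exists l, derivable_pt_lim rho s l /\ l < 0) /\ 0 < rho s.

Definition S4 (rho r : R -> R) : Prop :=
  lim_infty rho 0 /\ exists rinf, 0 < rinf /\ lim_infty r rinf.

Definition toy_steady_tip_growth (g : R -> R) (beta : R) (rho r : R -> R)
    (smax : option R) : Prop :=
  toy_solution g beta rho r smax /\
  S1 rho r /\ S2 rho r smax /\ S3 rho r smax /\ S4 rho r.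

Definition toy_tip_solution (g : R -> R) (beta : R) (rho r : R -> R)
    (smax : option R) : Prop :=
  toy_solution g beta rho r smax /\
  S1 rho r /\ S2 rho r smax /\
  exists s0, in_dom smax s0 /\
    forall s, 0 < s < s0 ->
      (exists l, derivable_pt_lim rho s l /\ l < 0) /\ 0 < rho s.

Definition maximal_toy_tip_solution (g : R -> R) (beta : R) (rho r : R -> R)
    (smax : option R) : Prop :=
  toy_tip_solution g beta rho r smax /\
  forall rho2 r2 smax2,
    toy_tip_solution g beta rho2 r2 smax2 ->
    (forall s, in_dom smax s -> in_dom smax2 s /\ rho2 s = rho s /\ r2 s = r s) ->
    forall s, in_dom smax2 s -> in_dom smax s.

Definition A_cond (rho : R -> R) (smax : option R) : Prop :=
  exists s0, in_dom smax s0 /\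
    (forall s, 0 < s < s0 ->
       exists l, derivable_pt_lim rho s l /\ rho s * l < 0) /\
    rho s0 = 0.

Definition B_cond (rho : R -> R) (smax : option R) : Prop :=
  exists s0, in_dom smax s0 /\
    (forall s, 0 < s < s0 ->
       exists l, derivable_pt_lim rho s l /\ rho s * l < 0) /\
    derivable_pt_lim rho s0 0.

(** beta in X_toy := R_{>0} \ (A_toy u B_toy), with (rho_beta, r_beta) the
    maximal toy tip solution. *)
Definition in_X_toy (g : R -> R) (beta : R) : Prop :=
  0 < beta /\
  forall rho r smax, maximal_toy_tip_solution g beta rho r smax ->
    ~ A_cond rho smax /\ ~ B_cond rho smax.

(* Main.v *)
Require Import Defs.
From Stdlib Require Import Reals Lra Lia.
From Coquelicot Require Import Coquelicot.
Open Scope R_scope.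

Definition RI (f : R -> R) (a b : R) : R := RInt f a b.

Lemma lip_cont (f : R -> R) K : 0 <= K ->
  (forall u v, Rabs (f u - f v) <= K * Rabs (u - v)) -> forall z, continuous f z.
Proof. unfold RI.
  intros HK Hf z. apply continuity_pt_filterlim.
  unfold continuity_pt, continue_in, limit1_in, limit_in. intros eps Heps.
  exists (eps / (K + 1)). split.
  - apply Rdiv_lt_0_compat; lra.
  - intros x [_ Hx]. simpl in *. unfold Rdist in *.
    eapply Rle_lt_trans. apply Hf.
    apply Rle_lt_trans with ((K+1) * Rabs (x - z)).
    + apply Rmult_le_compat_r. apply Rabs_pos. lra.
    + apply Rmult_lt_reg_l with (/ (K+1)). apply Rinv_0_lt_compat; lra.
      rewrite <- Rmult_assoc, Rinv_l by lra. rewrite Rmult_1_l.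
      unfold Rdiv in Hx. lra.
Qed.

Lemma int_bound (f : R -> R) M x y :
  (forall z, continuous f z) ->
  (forall u, Rmin x y <= u <= Rmax x y -> Rabs (f u) <= M) ->
  Rabs (RI f x y) <= M * Rabs (y - x).
Proof. unfold RI.
  intros Hc Hb.
  assert (Hex : forall a b, ex_RInt f a b).
  { intros a b. apply (@ex_RInt_continuous R_CompleteNormedModule). intros; apply Hc. }
  destruct (Rle_dec x y) as [Hxy|Hxy].
  - rewrite (Rabs_right (y - x)) by lra. rewrite Rmult_comm.
    apply abs_RInt_le_const; [lra | apply Hex | intros; apply Hb].
    rewrite Rmin_left, Rmax_right; lra.
  - rewrite <- opp_RInt_swap by apply Hex.
    change (opp (RInt f y x)) with (- RInt f y x).
    rewrite Rabs_Ropp, (Rabs_left (y - x)) by lra.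
    replace (- (y - x)) with (x - y) by ring. rewrite Rmult_comm.
    apply abs_RInt_le_const; [lra | apply Hex | intros; apply Hb].
    rewrite Rmin_right, Rmax_left; lra.
Qed.

Lemma RInt_minus_R (f g : R -> R) a b :
  (forall z, continuous f z) -> (forall z, continuous g z) ->
  RI (fun u => f u - g u) a b = RI f a b - RI g a b.
Proof. unfold RI.
  intros Hf Hg.
  assert (Hex : forall h : R -> R, (forall z, continuous h z) -> ex_RInt h a b).
  { intros h Hh. apply (@ex_RInt_continuous R_CompleteNormedModule). intros; apply Hh. }
  apply (@RInt_minus R_CompleteNormedModule f g a b (Hex f Hf) (Hex g Hg)).
Qed.

Lemma RInt_chasles_R (f : R -> R) a b c :
  (forall z, continuous f z) -> RI f a b + RI f b c = RI f a c.
Proof. unfold RI.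
  intros Hf.
  assert (Hex : forall a b, ex_RInt f a b).
  { intros x y. apply (@ex_RInt_continuous R_CompleteNormedModule). intros; apply Hf. }
  apply (@RInt_Chasles R_CompleteNormedModule f a b c (Hex a b) (Hex b c)).
Qed.

Lemma RInt_const_R (c a b : R) : RI (fun _ => c) a b = (b - a) * c.
Proof. unfold RI. rewrite RInt_const. reflexivity. Qed.

Lemma RInt_point_R (f : R -> R) a : RI f a a = 0.
Proof. unfold RI. rewrite RInt_point. reflexivity. Qed.

Lemma cont_minus (f g : R -> R) z : continuous f z -> continuous g z ->
  continuous (fun u => f u - g u) z.
Proof.
  intros Hf Hg. apply continuity_pt_filterlim.
  apply continuity_pt_minus; apply continuity_pt_filterlim; auto.
Qed.

Lemma tel (u : nat -> R) C : (forall n, Rabs (u (S n) - u n) <= C * (/2)^n) ->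
  forall n j, Rabs (u (n+j)%nat - u n) <= 2*C*(/2)^n - 2*C*(/2)^(n+j).
Proof.
  intros H n j. induction j as [|j IH].
  - rewrite Nat.add_0_r. unfold Rminus. rewrite !Rplus_opp_r, Rabs_R0. lra.
  - replace (n + S j)%nat with (S (n + j)) by lia.
    replace (u (S (n+j)) - u n) with ((u (S (n+j)) - u (n+j)%nat) + (u (n+j)%nat - u n)) by ring.
    eapply Rle_trans. apply Rabs_triang.
    pose proof (H (n+j)%nat). simpl pow. lra.
Qed.

Lemma lim_close (u : nat -> R) l c e N : Un_cv u l ->
  (forall m, (N <= m)%nat -> Rabs (u m - c) <= e) -> Rabs (l - c) <= e.
Proof.
  intros Hu Hb. destruct (Rle_dec (Rabs (l - c)) e) as [H|H]; auto. exfalso.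
  destruct (Hu (Rabs (l - c) - e)) as [N1 HN1]. lra.
  specialize (HN1 (max N N1) ltac:(lia)). specialize (Hb (max N N1) ltac:(lia)).
  unfold Rdist in HN1.
  pose proof (Rabs_triang (u (max N N1) - c) (l - u (max N N1))).
  replace (u (max N N1) - c + (l - u (max N N1))) with (l - c) in H0 by ring.
  rewrite Rabs_minus_sym in HN1. lra.
Qed.

Lemma half_zero x C : (forall n, Rabs x <= C * (/2)^n) -> x = 0.
Proof.
  intros H. destruct (Req_dec x 0) as [|Hx]; auto. exfalso.
  pose proof (Rabs_pos_lt x Hx).
  pose proof (H 0%nat). simpl in H1. rewrite Rmult_1_r in H1.
  destruct (pow_lt_1_zero (/2) ltac:(rewrite Rabs_right; lra) (Rabs x / C)) as [N HN].
  apply Rdiv_lt_0_compat; lra.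
  specialize (HN N (le_n N)). specialize (H N).
  rewrite Rabs_right in HN by (apply Rle_ge, pow_le; lra).
  apply (Rmult_lt_compat_l C) in HN; [|lra].
  replace (C * (Rabs x / C)) with (Rabs x) in HN by (field; lra). lra.
Qed.

Lemma pow_half_pos n : 0 < (/2)^n.
Proof. apply pow_lt; lra. Qed.

Lemma geo_lim (u : nat -> R) C : 0 <= C -> (forall n, Rabs (u (S n) - u n) <= C * (/2)^n) ->
  Un_cv u (real (Lim_seq u)) /\ forall n, Rabs (real (Lim_seq u) - u n) <= 2 * C * (/2)^n.
Proof.
  intros HC H.
  pose proof (tel u C H) as T.
  assert (Hc : ex_lim_seq_cauchy u).
  { intros eps. destruct (pow_lt_1_zero (/2) ltac:(rewrite Rabs_right; lra) (eps / (2*C+1))) as [N HN].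
    apply Rdiv_lt_0_compat. apply cond_pos. lra.
    exists N. intros n m Hn Hm.
    assert (Hk : forall p q, (N <= p)%nat -> (p <= q)%nat -> Rabs (u q - u p) < eps).
    { intros p q Hp Hq. replace q with (p + (q - p))%nat by lia.
      eapply Rle_lt_trans. apply T.
      pose proof (pow_half_pos (p + (q-p))).
      specialize (HN p Hp). rewrite Rabs_right in HN by (apply Rle_ge, pow_le; lra).
      apply Rle_lt_trans with (2 * C * (/2)^p). nra.
      apply Rle_lt_trans with ((2*C+1) * (/2)^p). pose proof (pow_half_pos p). nra.
      apply Rmult_lt_reg_l with (/ (2*C+1)). apply Rinv_0_lt_compat; lra.
      rewrite <- Rmult_assoc, Rinv_l, Rmult_1_l by lra.
      unfold Rdiv in HN. pose proof (cond_pos eps). nra. }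
    destruct (Nat.le_gt_cases n m).
    - rewrite Rabs_minus_sym. apply Hk; auto.
    - apply Hk; auto; lia. }
  apply ex_lim_seq_cauchy_corr in Hc.
  pose proof (Lim_seq_correct' u Hc) as Hl.
  apply is_lim_seq_Reals in Hl. split; auto.
  intros n. apply (lim_close u _ _ _ n Hl).
  intros m Hm. replace m with (n + (m - n))%nat by lia.
  eapply Rle_trans. apply T. pose proof (pow_half_pos (n + (m-n))). nra.
Qed.

Definition clamp d t := Rmax 0 (Rmin d t).

Lemma clamp_range d t : 0 <= d -> 0 <= clamp d t <= d.
Proof. intros. unfold clamp, Rmax, Rmin. repeat destruct Rle_dec; lra. Qed.

Lemma clamp_lip d t s : 0 <= d -> Rabs (clamp d t - clamp d s) <= Rabs (t - s).
Proof. intros. unfold clamp, Rmax, Rmin. unfold Rabs. repeat destruct Rle_dec; repeat destruct Rcase_abs; lra. Qed.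

Lemma clamp_id d t : 0 <= t <= d -> clamp d t = t.
Proof. intros. unfold clamp, Rmax, Rmin. repeat destruct Rle_dec; lra. Qed.

Definition boxF (F : R -> R -> R) a b k M L :=
  forall p q p' q', Rabs (p - a) <= k -> Rabs (q - b) <= k ->
    Rabs (p' - a) <= k -> Rabs (q' - b) <= k ->
    Rabs (F p q) <= M /\ Rabs (F p q - F p' q') <= L * Rmax (Rabs (p - p')) (Rabs (q - q')).

Fixpoint PQ (F1 F2 : R -> R -> R) (a b d : R) (n : nat) : (R -> R) * (R -> R) :=
  match n with
  | O => (fun _ => a, fun _ => b)
  | S n => let pq := PQ F1 F2 a b d n in
     (fun t => a + RI (fun u => F1 (fst pq u) (snd pq u)) 0 (clamp d t),
      fun t => b + RI (fun u => F2 (fst pq u) (snd pq u)) 0 (clamp d t))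
  end.

Definition goodPQ a b k M (P Q : R -> R) :=
  forall t s, Rabs (P t - a) <= k /\ Rabs (Q t - b) <= k /\
    Rabs (P t - P s) <= M * Rabs (t - s) /\ Rabs (Q t - Q s) <= M * Rabs (t - s).

Lemma comp_good F a b k M L P Q : 0 <= M -> 0 <= L -> boxF F a b k M L -> goodPQ a b k M P Q ->
  (forall u, Rabs (F (P u) (Q u)) <= M) /\
  (forall u v, Rabs (F (P u) (Q u) - F (P v) (Q v)) <= (L * M) * Rabs (u - v)) /\
  (forall z, continuous (fun u => F (P u) (Q u)) z).
Proof.
  intros HM HL HF HG.
  assert (H2 : forall u v, Rabs (F (P u) (Q u) - F (P v) (Q v)) <= (L * M) * Rabs (u - v)).
  { intros u v. destruct (HG u v) as (H1 & H2 & H3 & H4). destruct (HG v u) as (H5 & H6 & _).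
    destruct (HF _ _ _ _ H1 H2 H5 H6) as [_ HH]. eapply Rle_trans. apply HH.
    rewrite Rmult_assoc. apply Rmult_le_compat_l; auto. apply Rmax_lub; auto. }
  split; [|split; auto].
  - intros u. destruct (HG u u) as (H1 & H3 & _). apply (HF _ _ _ _ H1 H3 H1 H3).
  - apply lip_cont with (L * M). apply Rmult_le_pos; auto. auto.
Qed.

Lemma step_good (f : R -> R) a k M d : 0 <= d -> M * d <= k -> 0 <= M ->
  (forall z, continuous f z) -> (forall u, Rabs (f u) <= M) ->
  forall t s, Rabs (a + RI f 0 (clamp d t) - a) <= k /\
    Rabs ((a + RI f 0 (clamp d t)) - (a + RI f 0 (clamp d s))) <= M * Rabs (t - s).
Proof.
  intros Hd HMd HM Hc Hb t s. split.
  - replace (a + RI f 0 (clamp d t) - a) with (RI f 0 (clamp d t)) by ring.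
    eapply Rle_trans. apply int_bound; auto.
    destruct (clamp_range d t Hd). rewrite Rminus_0_r, Rabs_right by lra.
    apply Rle_trans with (M * d); auto. apply Rmult_le_compat_l; lra.
  - rewrite <- (RInt_chasles_R f 0 (clamp d s) (clamp d t)) by auto.
    replace (a + (RI f 0 (clamp d s) + RI f (clamp d s) (clamp d t)) -
      (a + RI f 0 (clamp d s))) with (RI f (clamp d s) (clamp d t)) by ring.
    eapply Rle_trans. apply int_bound; auto.
    apply Rmult_le_compat_l; auto. apply clamp_lip; auto.
Qed.


Lemma PQ_good F1 F2 a b k M L d : 0 <= M -> 0 <= L -> 0 <= d -> M * d <= k ->
  boxF F1 a b k M L -> boxF F2 a b k M L -> 0 <= k ->
  forall n, goodPQ a b k M (fst (PQ F1 F2 a b d n)) (snd (PQ F1 F2 a b d n)).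
Proof.
  intros HM HL Hd HMd HF1 HF2 Hk n. induction n as [|n IH].
  - intros t s. simpl. unfold Rminus. rewrite !Rplus_opp_r, Rabs_R0.
    assert (0 <= M * Rabs (t + - s)) by (apply Rmult_le_pos; auto; apply Rabs_pos). lra.
  - destruct (comp_good F1 a b k M L _ _ HM HL HF1 IH) as (B1 & _ & C1).
    destruct (comp_good F2 a b k M L _ _ HM HL HF2 IH) as (B2 & _ & C2).
    intros t s. simpl.
    destruct (step_good _ a k M d Hd HMd HM C1 B1 t s).
    destruct (step_good _ b k M d Hd HMd HM C2 B2 t s). tauto.
Qed.

Lemma diff_int (f g : R -> R) e c : (forall z, continuous f z) -> (forall z, continuous g z) ->
  (forall u, Rabs (f u - g u) <= e) -> Rabs (RI f 0 c - RI g 0 c) <= e * Rabs c.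
Proof.
  intros Hf Hg H. rewrite <- RInt_minus_R by auto.
  replace (Rabs c) with (Rabs (c - 0)) by (f_equal; ring).
  apply int_bound.
  - intros z. apply cont_minus; auto.
  - intros; auto.
Qed.

Lemma PQ_S1 F1 F2 a b d n t : fst (PQ F1 F2 a b d (S n)) t =
  a + RI (fun u => F1 (fst (PQ F1 F2 a b d n) u) (snd (PQ F1 F2 a b d n) u)) 0 (clamp d t).
Proof. reflexivity. Qed.
Lemma PQ_S2 F1 F2 a b d n t : snd (PQ F1 F2 a b d (S n)) t =
  b + RI (fun u => F2 (fst (PQ F1 F2 a b d n) u) (snd (PQ F1 F2 a b d n) u)) 0 (clamp d t).
Proof. reflexivity. Qed.
Lemma PQ_01 F1 F2 a b d t : fst (PQ F1 F2 a b d 0) t = a.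
Proof. reflexivity. Qed.
Lemma PQ_02 F1 F2 a b d t : snd (PQ F1 F2 a b d 0) t = b.
Proof. reflexivity. Qed.

Lemma diff_comp F a b k M L P Q P' Q' e : 0 <= L -> boxF F a b k M L ->
  goodPQ a b k M P Q -> goodPQ a b k M P' Q' ->
  (forall u, Rabs (P' u - P u) <= e /\ Rabs (Q' u - Q u) <= e) ->
  forall u, Rabs (F (P' u) (Q' u) - F (P u) (Q u)) <= L * e.
Proof.
  intros HL HF G1 G2 He u.
  destruct (G1 u u) as (H1 & H2 & _). destruct (G2 u u) as (H3 & H4 & _).
  destruct (HF _ _ _ _ H3 H4 H1 H2) as [_ HH]. eapply Rle_trans. apply HH.
  apply Rmult_le_compat_l; auto. apply Rmax_lub; apply He.
Qed.

Lemma PQ_diff F1 F2 a b k M L d : 0 <= M -> 0 <= L -> 0 <= d -> M * d <= k -> L * d <= / 2 ->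
  boxF F1 a b k M L -> boxF F2 a b k M L -> 0 <= k ->
  forall n t, Rabs (fst (PQ F1 F2 a b d (S n)) t - fst (PQ F1 F2 a b d n) t) <= k * (/2)^n /\
              Rabs (snd (PQ F1 F2 a b d (S n)) t - snd (PQ F1 F2 a b d n) t) <= k * (/2)^n.
Proof.
  intros HM HL Hd HMd HLd HF1 HF2 Hk.
  pose proof (PQ_good F1 F2 a b k M L d HM HL Hd HMd HF1 HF2 Hk) as G.
  induction n as [|n IH]; intros t.
  - rewrite PQ_S1, PQ_S2, PQ_01, PQ_02. simpl pow. rewrite Rmult_1_r.
    destruct (comp_good F1 a b k M L _ _ HM HL HF1 (G 0%nat)) as (B1 & _ & C1).
    destruct (comp_good F2 a b k M L _ _ HM HL HF2 (G 0%nat)) as (B2 & _ & C2).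
    destruct (step_good _ a k M d Hd HMd HM C1 B1 t t).
    destruct (step_good _ b k M d Hd HMd HM C2 B2 t t). tauto.
  - destruct (comp_good F1 a b k M L _ _ HM HL HF1 (G n)) as (B1 & _ & C1).
    destruct (comp_good F2 a b k M L _ _ HM HL HF2 (G n)) as (B2 & _ & C2).
    destruct (comp_good F1 a b k M L _ _ HM HL HF1 (G (S n))) as (B1' & _ & C1').
    destruct (comp_good F2 a b k M L _ _ HM HL HF2 (G (S n))) as (B2' & _ & C2').
    pose proof (clamp_range d t Hd) as Hc.
    assert (Hfin : L * (k * (/2)^n) * Rabs (clamp d t) <= k * (/2)^(S n)).
    { rewrite Rabs_right by lra. simpl pow.
      assert (0 <= k * (/2)^n) by (apply Rmult_le_pos; auto; apply pow_le; lra).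
      apply Rle_trans with (k * (/2)^n * (L * d)).
      - replace (L * (k * (/ 2) ^ n) * clamp d t) with (k * (/2)^n * (L * clamp d t)) by ring.
        apply Rmult_le_compat_l; auto. apply Rmult_le_compat_l; lra.
      - replace (k * (/ 2 * (/ 2) ^ n)) with (k * (/2)^n * (/2)) by ring.
        apply Rmult_le_compat_l; auto. }
    split.
    + rewrite (PQ_S1 _ _ _ _ _ (S n)), (PQ_S1 _ _ _ _ _ n).
      replace (a + RI (fun u => F1 (fst (PQ F1 F2 a b d (S n)) u) (snd (PQ F1 F2 a b d (S n)) u)) 0 (clamp d t) -
        (a + RI (fun u => F1 (fst (PQ F1 F2 a b d n) u) (snd (PQ F1 F2 a b d n) u)) 0 (clamp d t)))
      with (RI (fun u => F1 (fst (PQ F1 F2 a b d (S n)) u) (snd (PQ F1 F2 a b d (S n)) u)) 0 (clamp d t) -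
        RI (fun u => F1 (fst (PQ F1 F2 a b d n) u) (snd (PQ F1 F2 a b d n) u)) 0 (clamp d t)) by ring.
      eapply Rle_trans; [|apply Hfin]. apply diff_int; auto.
      apply (diff_comp F1 a b k M L); auto.
    + rewrite (PQ_S2 _ _ _ _ _ (S n)), (PQ_S2 _ _ _ _ _ n).
      replace (b + RI (fun u => F2 (fst (PQ F1 F2 a b d (S n)) u) (snd (PQ F1 F2 a b d (S n)) u)) 0 (clamp d t) -
        (b + RI (fun u => F2 (fst (PQ F1 F2 a b d n) u) (snd (PQ F1 F2 a b d n) u)) 0 (clamp d t)))
      with (RI (fun u => F2 (fst (PQ F1 F2 a b d (S n)) u) (snd (PQ F1 F2 a b d (S n)) u)) 0 (clamp d t) -
        RI (fun u => F2 (fst (PQ F1 F2 a b d n) u) (snd (PQ F1 F2 a b d n) u)) 0 (clamp d t)) by ring.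
      eapply Rle_trans; [|apply Hfin]. apply diff_int; auto.
      apply (diff_comp F2 a b k M L); auto.
Qed.


Lemma quad_est (f : R -> R) P a K x y : 0 <= K -> (forall z, continuous f z) ->
  (forall u v, Rabs (f u - f v) <= K * Rabs (u - v)) ->
  P x = a + RI f 0 x -> P y = a + RI f 0 y ->
  Rabs (P y - P x - (y - x) * f x) <= K * (y - x)^2.
Proof.
  intros HK Hc Hl Hx Hy. rewrite Hx, Hy.
  rewrite <- (RInt_chasles_R f 0 x y) by auto.
  rewrite <- (RInt_const_R (f x) x y).
  replace (a + (RI f 0 x + RI f x y) - (a + RI f 0 x) - RI (fun _ : R => f x) x y)
    with (RI f x y - RI (fun _ : R => f x) x y) by ring.
  rewrite <- RInt_minus_R; auto.
  2: { intros z. apply lip_cont with 0; [lra|]. intros; unfold Rminus; rewrite Rplus_opp_r, Rabs_R0; lra. }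
  eapply Rle_trans. apply (int_bound _ (K * Rabs (y - x))).
  - intros z. apply cont_minus; auto.
    apply lip_cont with 0; [lra|]. intros; unfold Rminus; rewrite Rplus_opp_r, Rabs_R0; lra.
  - intros u Hu. eapply Rle_trans. apply Hl. apply Rmult_le_compat_l; auto.
    unfold Rmin, Rmax in Hu. unfold Rabs. repeat destruct Rcase_abs; destruct Rle_dec; lra.
  - rewrite Rmult_assoc, <- Rabs_mult. rewrite Rabs_right. right; ring.
    apply Rle_ge. apply Rle_0_sqr.
Qed.

Lemma picard F1 F2 a b k M L d : 0 <= M -> 0 <= L -> 0 <= d -> M * d <= k -> L * d <= / 2 ->
  boxF F1 a b k M L -> boxF F2 a b k M L -> 0 <= k ->
  exists P Q : R -> R, P 0 = a /\ Q 0 = b /\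
    (forall t, Rabs (P t - a) <= k /\ Rabs (Q t - b) <= k) /\
    (forall x y, 0 <= x <= d -> 0 <= y <= d ->
       Rabs (P y - P x - (y - x) * F1 (P x) (Q x)) <= L * M * (y - x)^2 /\
       Rabs (Q y - Q x - (y - x) * F2 (P x) (Q x)) <= L * M * (y - x)^2).
Proof.
  intros HM HL Hd HMd HLd HF1 HF2 Hk.
  pose proof (PQ_good F1 F2 a b k M L d HM HL Hd HMd HF1 HF2 Hk) as G.
  pose proof (PQ_diff F1 F2 a b k M L d HM HL Hd HMd HLd HF1 HF2 Hk) as D.
  set (Pn := fun n => fst (PQ F1 F2 a b d n)).
  set (Qn := fun n => snd (PQ F1 F2 a b d n)).
  set (Pl := fun t => real (Lim_seq (fun n => Pn n t))).
  set (Ql := fun t => real (Lim_seq (fun n => Qn n t))).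
  assert (LP : forall t, Un_cv (fun n => Pn n t) (Pl t) /\ forall n, Rabs (Pl t - Pn n t) <= 2 * k * (/2)^n).
  { intros t. apply geo_lim; auto. intros n. apply (D n t). }
  assert (LQ : forall t, Un_cv (fun n => Qn n t) (Ql t) /\ forall n, Rabs (Ql t - Qn n t) <= 2 * k * (/2)^n).
  { intros t. apply geo_lim; auto. intros n. apply (D n t). }
  assert (GL : goodPQ a b k M Pl Ql).
  { intros t s. repeat split.
    - apply (lim_close _ _ _ _ 0 (proj1 (LP t))). intros m _. apply (G m t t).
    - apply (lim_close _ _ _ _ 0 (proj1 (LQ t))). intros m _. apply (G m t t).
    - replace (Pl t - Pl s) with (Pl t - Pl s - 0) by ring.
      apply (lim_close (fun n => Pn n t - Pn n s) _ _ _ 0).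
      + apply CV_minus; [apply (LP t) | apply (LP s)].
      + intros m _. rewrite Rminus_0_r. apply (G m t s).
    - replace (Ql t - Ql s) with (Ql t - Ql s - 0) by ring.
      apply (lim_close (fun n => Qn n t - Qn n s) _ _ _ 0).
      + apply CV_minus; [apply (LQ t) | apply (LQ s)].
      + intros m _. rewrite Rminus_0_r. apply (G m t s). }
  destruct (comp_good F1 a b k M L _ _ HM HL HF1 GL) as (B1 & L1 & C1).
  destruct (comp_good F2 a b k M L _ _ HM HL HF2 GL) as (B2 & L2 & C2).
  assert (Hclose : forall n u, Rabs (Pn n u - Pl u) <= 2 * k * (/2)^n /\ Rabs (Qn n u - Ql u) <= 2 * k * (/2)^n).
  { intros n u. rewrite Rabs_minus_sym, (Rabs_minus_sym (Qn n u)). split; [apply (LP u)|apply (LQ u)]. }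
  assert (IE1 : forall t, Pl t = a + RI (fun u => F1 (Pl u) (Ql u)) 0 (clamp d t)).
  { intros t. apply Rminus_diag_uniq. apply (half_zero _ (k + 2 * k * L * d)). intros n.
    destruct (comp_good F1 a b k M L _ _ HM HL HF1 (G n)) as (B1n & _ & C1n).
    pose proof (diff_int _ _ (L * (2 * k * (/2)^n)) (clamp d t) C1n C1
       (diff_comp F1 a b k M L Pl Ql (Pn n) (Qn n) _ HL HF1 GL (G n) (Hclose n))).
    pose proof (proj2 (LP t) (S n)). unfold Pn in H0. rewrite PQ_S1 in H0.
    fold (Pn n) (Qn n) in H0.
    change (RI (fun u => F1 (fst (PQ F1 F2 a b d n) u) (snd (PQ F1 F2 a b d n) u)) 0 (clamp d t)) with (RI (fun u => F1 (Pn n u) (Qn n u)) 0 (clamp d t)) in H.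
    pose proof (clamp_range d t Hd). rewrite (Rabs_right (clamp d t)) in H by lra.
    replace (Pl t - (a + RI (fun u => F1 (Pl u) (Ql u)) 0 (clamp d t))) with
      ((Pl t - (a + RI (fun u => F1 (Pn n u) (Qn n u)) 0 (clamp d t))) +
       (RI (fun u => F1 (Pn n u) (Qn n u)) 0 (clamp d t) - RI (fun u => F1 (Pl u) (Ql u)) 0 (clamp d t))) by ring.
    eapply Rle_trans. apply Rabs_triang. simpl pow in H0.
    pose proof (pow_half_pos n).
    assert (L * (2 * k * (/ 2) ^ n) * clamp d t <= 2 * k * L * d * (/2)^n).
    { replace (L * (2 * k * (/ 2) ^ n) * clamp d t) with (2 * k * (/2)^n * L * clamp d t) by ring.
      replace (2 * k * L * d * (/2)^n) with (2 * k * (/2)^n * L * d) by ring.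
      apply Rmult_le_compat_l; [|lra]. apply Rmult_le_pos; [|lra]. nra. }
    apply Rle_trans with (2 * k * (/ 2 * (/ 2) ^ n) + 2 * k * L * d * (/2)^n).
    apply Rplus_le_compat. apply H0. eapply Rle_trans. apply H. auto.
    right. field. }
  assert (IE2 : forall t, Ql t = b + RI (fun u => F2 (Pl u) (Ql u)) 0 (clamp d t)).
  { intros t. apply Rminus_diag_uniq. apply (half_zero _ (k + 2 * k * L * d)). intros n.
    destruct (comp_good F2 a b k M L _ _ HM HL HF2 (G n)) as (B2n & _ & C2n).
    pose proof (diff_int _ _ (L * (2 * k * (/2)^n)) (clamp d t) C2n C2
       (diff_comp F2 a b k M L Pl Ql (Pn n) (Qn n) _ HL HF2 GL (G n) (Hclose n))).
    pose proof (proj2 (LQ t) (S n)). unfold Qn in H0. rewrite PQ_S2 in H0.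
    fold (Pn n) (Qn n) in H0.
    change (RI (fun u => F2 (fst (PQ F1 F2 a b d n) u) (snd (PQ F1 F2 a b d n) u)) 0 (clamp d t)) with (RI (fun u => F2 (Pn n u) (Qn n u)) 0 (clamp d t)) in H.
    pose proof (clamp_range d t Hd). rewrite (Rabs_right (clamp d t)) in H by lra.
    replace (Ql t - (b + RI (fun u => F2 (Pl u) (Ql u)) 0 (clamp d t))) with
      ((Ql t - (b + RI (fun u => F2 (Pn n u) (Qn n u)) 0 (clamp d t))) +
       (RI (fun u => F2 (Pn n u) (Qn n u)) 0 (clamp d t) - RI (fun u => F2 (Pl u) (Ql u)) 0 (clamp d t))) by ring.
    eapply Rle_trans. apply Rabs_triang. simpl pow in H0.
    pose proof (pow_half_pos n).
    assert (L * (2 * k * (/ 2) ^ n) * clamp d t <= 2 * k * L * d * (/2)^n).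
    { replace (L * (2 * k * (/ 2) ^ n) * clamp d t) with (2 * k * (/2)^n * L * clamp d t) by ring.
      replace (2 * k * L * d * (/2)^n) with (2 * k * (/2)^n * L * d) by ring.
      apply Rmult_le_compat_l; [|lra]. apply Rmult_le_pos; [|lra]. nra. }
    apply Rle_trans with (2 * k * (/ 2 * (/ 2) ^ n) + 2 * k * L * d * (/2)^n).
    apply Rplus_le_compat. apply H0. eapply Rle_trans. apply H. auto.
    right. field. }
  exists Pl, Ql. repeat split.
  - rewrite IE1, clamp_id by lra. rewrite RInt_point_R. ring.
  - rewrite IE2, clamp_id by lra. rewrite RInt_point_R. ring.
  - apply (GL t t).
  - apply (GL t t).
  - apply (quad_est (fun u => F1 (Pl u) (Ql u)) Pl a); auto.
    apply Rmult_le_pos; auto. rewrite IE1, clamp_id; auto. rewrite IE1, clamp_id; auto.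
  - apply (quad_est (fun u => F2 (Pl u) (Ql u)) Ql b); auto.
    apply Rmult_le_pos; auto. rewrite IE2, clamp_id; auto. rewrite IE2, clamp_id; auto.
Qed.

Definition LBx F a b k := exists M L, 0 <= M /\ 0 <= L /\ boxF F a b k M L.

Lemma boxF_mono F a b k M L M' L' : M <= M' -> L <= L' -> 0 <= L -> boxF F a b k M L -> boxF F a b k M' L'.
Proof.
  intros HM HL HL0 H p q p' q' H1 H2 H3 H4. destruct (H p q p' q' H1 H2 H3 H4) as [X Y].
  split. lra. eapply Rle_trans. apply Y. apply Rmult_le_compat_r; auto.
  apply Rle_trans with (Rabs (p - p')). apply Rabs_pos. apply Rmax_l.
Qed.

Lemma dist_l p q p' q' : Rabs (p - p') <= Rmax (Rabs (p - p')) (Rabs (q - q')).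
Proof. apply Rmax_l. Qed.
Lemma dist_r p q p' q' : Rabs (q - q') <= Rmax (Rabs (p - p')) (Rabs (q - q')).
Proof. apply Rmax_r. Qed.
Lemma dist_pos p q p' q' : 0 <= Rmax (Rabs (p - p')) (Rabs (q - q')).
Proof. eapply Rle_trans. apply Rabs_pos. apply Rmax_l. Qed.

Lemma LB_ext F G a b k : (forall p q, Rabs (p - a) <= k -> Rabs (q - b) <= k -> F p q = G p q) ->
  LBx F a b k -> LBx G a b k.
Proof.
  intros He (M & L & HM & HL & H). exists M, L. split; [auto|split; [auto|]].
  intros p q p' q' H1 H2 H3 H4. rewrite <- (He p q), <- (He p' q') by auto. apply H; auto.
Qed.

Lemma LB_const c a b k : LBx (fun _ _ => c) a b k.
Proof.
  exists (Rabs c), 0. split; [apply Rabs_pos|split;[lra|]].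
  intros p q p' q' _ _ _ _. split; [lra|].
  unfold Rminus. rewrite Rplus_opp_r, Rabs_R0. pose proof (dist_pos p q p' q'). nra.
Qed.

Lemma LB_p a b k : 0 <= k -> LBx (fun p _ => p) a b k.
Proof.
  intros Hk. exists (Rabs a + k), 1. split; [pose proof (Rabs_pos a); lra|split;[lra|]].
  intros p q p' q' H1 _ _ _. split.
  - pose proof (Rabs_triang (p - a) a). replace (p - a + a) with p in H by ring. lra.
  - rewrite Rmult_1_l. apply dist_l.
Qed.

Lemma LB_q a b k : 0 <= k -> LBx (fun _ q => q) a b k.
Proof.
  intros Hk. exists (Rabs b + k), 1. split; [pose proof (Rabs_pos b); lra|split;[lra|]].
  intros p q p' q' _ H1 _ _. split.
  - pose proof (Rabs_triang (q - b) b). replace (q - b + b) with q in H by ring. lra.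
  - rewrite Rmult_1_l. apply dist_r.
Qed.

Lemma LB_plus F G a b k : LBx F a b k -> LBx G a b k -> LBx (fun p q => F p q + G p q) a b k.
Proof.
  intros (M1 & L1 & HM1 & HL1 & H1) (M2 & L2 & HM2 & HL2 & H2).
  exists (M1 + M2), (L1 + L2). split; [lra|split;[lra|]].
  intros p q p' q' X1 X2 X3 X4.
  destruct (H1 p q p' q' X1 X2 X3 X4) as [A1 B1]. destruct (H2 p q p' q' X1 X2 X3 X4) as [A2 B2].
  split.
  - eapply Rle_trans. apply Rabs_triang. lra.
  - replace (F p q + G p q - (F p' q' + G p' q')) with ((F p q - F p' q') + (G p q - G p' q')) by ring.
    eapply Rle_trans. apply Rabs_triang. lra.
Qed.

Lemma LB_mult F G a b k : LBx F a b k -> LBx G a b k -> LBx (fun p q => F p q * G p q) a b k.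
Proof.
  intros (M1 & L1 & HM1 & HL1 & H1) (M2 & L2 & HM2 & HL2 & H2).
  exists (M1 * M2), (M1 * L2 + M2 * L1). split; [nra|split;[nra|]].
  intros p q p' q' X1 X2 X3 X4.
  destruct (H1 p q p' q' X1 X2 X3 X4) as [A1 B1]. destruct (H2 p q p' q' X1 X2 X3 X4) as [A2 B2].
  destruct (H1 p' q' p q X3 X4 X1 X2) as [A1' _]. destruct (H2 p' q' p q X3 X4 X1 X2) as [A2' _].
  set (dd := Rmax (Rabs (p - p')) (Rabs (q - q'))) in *.
  split.
  - rewrite Rabs_mult. apply Rmult_le_compat; auto; apply Rabs_pos.
  - replace (F p q * G p q - F p' q' * G p' q') with (F p q * (G p q - G p' q') + G p' q' * (F p q - F p' q')) by ring.
    eapply Rle_trans. apply Rabs_triang. rewrite !Rabs_mult.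
    assert (Rabs (F p q) * Rabs (G p q - G p' q') <= M1 * (L2 * dd)) by (apply Rmult_le_compat; auto; apply Rabs_pos).
    assert (Rabs (G p' q') * Rabs (F p q - F p' q') <= M2 * (L1 * dd)) by (apply Rmult_le_compat; auto; apply Rabs_pos).
    lra.
Qed.

Lemma LB_inv F a b k c : 0 < c -> (forall p q, Rabs (p - a) <= k -> Rabs (q - b) <= k -> c <= Rabs (F p q)) ->
  LBx F a b k -> LBx (fun p q => / F p q) a b k.
Proof.
  intros Hc Hlow (M & L & HM & HL & H).
  exists (/ c), (L / (c * c)). split; [apply Rlt_le, Rinv_0_lt_compat; lra|split].
  { apply Rmult_le_pos; auto. apply Rlt_le, Rinv_0_lt_compat; nra. }
  intros p q p' q' X1 X2 X3 X4.
  pose proof (Hlow p q X1 X2) as C1. pose proof (Hlow p' q' X3 X4) as C2.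
  destruct (H p q p' q' X1 X2 X3 X4) as [_ B1].
  assert (F p q <> 0) by (intro E; rewrite E, Rabs_R0 in C1; lra).
  assert (F p' q' <> 0) by (intro E; rewrite E, Rabs_R0 in C2; lra).
  split.
  - rewrite Rabs_inv. apply Rinv_le_contravar; auto.
  - replace (/ F p q - / F p' q') with ((F p' q' - F p q) * / (F p q * F p' q')) by (field; auto).
    rewrite Rabs_mult, Rabs_minus_sym, Rabs_inv, Rabs_mult.
    apply Rle_trans with ((L * Rmax (Rabs (p - p')) (Rabs (q - q'))) * / (c * c)).
    2: { right. unfold Rdiv. ring. }
    apply Rmult_le_compat; auto. apply Rabs_pos. apply Rlt_le, Rinv_0_lt_compat.
    apply Rmult_lt_0_compat; lra.
    apply Rinv_le_contravar. nra. apply Rmult_le_compat; lra.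
Qed.

Lemma sqrt_le_succ x : 0 <= x -> sqrt x <= x + 1.
Proof.
  intros Hx. pose proof (sqrt_sqrt x Hx). pose proof (sqrt_pos x). nra.
Qed.

Lemma LB_sqrt F a b k c : 0 < c -> (forall p q, Rabs (p - a) <= k -> Rabs (q - b) <= k -> c <= F p q) ->
  LBx F a b k -> LBx (fun p q => sqrt (F p q)) a b k.
Proof.
  intros Hc Hlow (M & L & HM & HL & H).
  pose proof (sqrt_lt_R0 c Hc) as Hsc.
  exists (M + 1), (L / (2 * sqrt c)). split; [lra|split].
  { apply Rmult_le_pos; auto. apply Rlt_le, Rinv_0_lt_compat; lra. }
  intros p q p' q' X1 X2 X3 X4.
  pose proof (Hlow p q X1 X2) as C1. pose proof (Hlow p' q' X3 X4) as C2.
  destruct (H p q p' q' X1 X2 X3 X4) as [A1 B1].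
  split.
  - rewrite Rabs_right by (apply Rle_ge, sqrt_pos). eapply Rle_trans. apply sqrt_le_succ. lra.
    rewrite Rabs_right in A1 by lra. lra.
  - assert (S1 : sqrt c <= sqrt (F p q)) by (apply sqrt_le_1_alt; lra).
    assert (S2 : sqrt c <= sqrt (F p' q')) by (apply sqrt_le_1_alt; lra).
    replace (sqrt (F p q) - sqrt (F p' q')) with ((F p q - F p' q') / (sqrt (F p q) + sqrt (F p' q'))).
    2: { field_simplify_eq. 2: lra. rewrite <- !Rsqr_pow2, !Rsqr_sqrt by lra. ring. }
    unfold Rdiv. rewrite Rabs_mult, Rabs_inv, (Rabs_right (_ + _)) by lra.
    apply Rle_trans with ((L * Rmax (Rabs (p - p')) (Rabs (q - q'))) * / (2 * sqrt c)).
    2: { right. unfold Rdiv. ring. }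
    apply Rmult_le_compat; auto. apply Rabs_pos. apply Rlt_le, Rinv_0_lt_compat; lra.
    apply Rinv_le_contravar; lra.
Qed.

Lemma LB_compq (h : R -> R) a b k : 0 <= k ->
  (exists Mh Kh, 0 <= Kh /\ forall x y, Rabs (x - b) <= k -> Rabs (y - b) <= k ->
     Rabs (h x) <= Mh /\ Rabs (h x - h y) <= Kh * Rabs (x - y)) ->
  LBx (fun _ q => h q) a b k.
Proof.
  intros Hk (Mh & Kh & HK & H). exists Mh, Kh. split.
  { destruct (H b b) as [X _]; try (unfold Rminus; rewrite Rplus_opp_r, Rabs_R0; lra).
    pose proof (Rabs_pos (h b)). lra. }
  split; auto. intros p q p' q' _ X2 _ X4. destruct (H q q' X2 X4) as [A1 B1]. split; auto.
  eapply Rle_trans. apply B1. apply Rmult_le_compat_l; auto. apply dist_r.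
Qed.

Lemma deriv_loc (f g : R -> R) x l : derivable_pt_lim f x l ->
  (exists e, 0 < e /\ forall y, Rabs (y - x) < e -> g y = f y) -> derivable_pt_lim g x l.
Proof.
  intros Hf (e & He & Hg) eps Heps. destruct (Hf eps Heps) as [d Hd].
  assert (Hm : 0 < Rmin d e) by (apply Rmin_pos; [apply cond_pos|auto]).
  exists (mkposreal _ Hm). intros h Hh0 Hh. simpl in Hh.
  rewrite (Hg (x + h)), (Hg x).
  - apply Hd; auto. eapply Rlt_le_trans. apply Hh. apply Rmin_l.
  - unfold Rminus. rewrite Rplus_opp_r, Rabs_R0. auto.
  - replace (x + h - x) with h by ring. eapply Rlt_le_trans. apply Hh. apply Rmin_r.
Qed.

Definition hh (g : R -> R) := fun w => w ^ 2 * g (w ^ 2).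

Lemma hh_deriv g : condG g -> forall w, 0 < w -> derivable_pt_lim (hh g) w (Derive (hh g) w).
Proof.
  intros (_ & _ & H3 & _) w Hw. destruct (H3 w Hw) as (l & (f1 & (eps & He & Hd) & _) & _).
  apply is_derive_Reals. apply Derive_correct. exists (f1 w). apply is_derive_Reals.
  apply Hd. unfold Rminus. rewrite Rplus_opp_r, Rabs_R0. auto.
Qed.

Lemma D_deriv g : condG g -> forall z, 0 < z ->
  exists l, 0 < l /\ derivable_pt_lim (Derive (hh g)) z l.
Proof.
  intros HG z Hz. destruct HG as (G1 & G2 & H3 & G4).
  destruct (H3 z Hz) as (l & (f1 & (eps & He & Hd) & Hf1) & Hl).
  exists l. split; auto. apply (deriv_loc f1); auto.
  exists eps. split; auto. intros y Hy.
  apply is_derive_unique. apply is_derive_Reals. apply Hd. auto.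
Qed.

Lemma D_mono g : condG g -> forall x y, 0 < x -> x <= y -> Derive (hh g) x <= Derive (hh g) y.
Proof.
  intros HG x y Hx Hxy. destruct (Req_dec x y) as [E|Ne]. subst; lra.
  assert (Hc : forall c, x <= c <= y -> derivable_pt_lim (Derive (hh g)) c (Derive (Derive (hh g)) c)).
  { intros c Hc. destruct (D_deriv g HG c ltac:(lra)) as (l & _ & Hl).
    apply is_derive_Reals. apply Derive_correct. exists l. apply is_derive_Reals. auto. }
  destruct (MVT_cor2 (Derive (hh g)) (Derive (Derive (hh g))) x y ltac:(lra) Hc) as (c & Hc1 & Hc2).
  destruct (D_deriv g HG c ltac:(lra)) as (l & Hl0 & Hl).
  assert (Derive (Derive (hh g)) c = l).
  { apply (uniqueness_limite (Derive (hh g)) c); auto. apply Hc; lra. }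
  nra.
Qed.

Lemma hh_lip g : condG g -> forall lo hi, 0 < lo ->
  forall x y, lo <= x <= hi -> lo <= y <= hi ->
  Rabs (hh g x - hh g y) <= Rmax (Rabs (Derive (hh g) lo)) (Rabs (Derive (hh g) hi)) * Rabs (x - y).
Proof.
  intros HG lo hi Hlo.
  assert (Key : forall x y, lo <= x <= hi -> lo <= y <= hi -> x < y ->
    Rabs (hh g y - hh g x) <= Rmax (Rabs (Derive (hh g) lo)) (Rabs (Derive (hh g) hi)) * Rabs (y - x)).
  { intros x y Hx Hy Hxy.
    destruct (MVT_cor2 (hh g) (Derive (hh g)) x y Hxy) as (c & Hc1 & Hc2).
    { intros c Hc. apply hh_deriv; auto; lra. }
    rewrite Hc1, Rabs_mult. apply Rmult_le_compat_r. apply Rabs_pos.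
    pose proof (D_mono g HG lo c Hlo ltac:(lra)). pose proof (D_mono g HG c hi ltac:(lra) ltac:(lra)).
    pose proof (Rmax_l (Rabs (Derive (hh g) lo)) (Rabs (Derive (hh g) hi))).
    pose proof (Rmax_r (Rabs (Derive (hh g) lo)) (Rabs (Derive (hh g) hi))).
    unfold Rabs in *. repeat destruct Rcase_abs; lra. }
  intros x y Hx Hy. destruct (Rtotal_order x y) as [H|[H|H]].
  - rewrite Rabs_minus_sym, (Rabs_minus_sym x). apply Key; auto.
  - subst. unfold Rminus. rewrite !Rplus_opp_r, Rabs_R0. lra.
  - apply Key; auto.
Qed.

Lemma hh_box g : condG g -> forall b k, 0 <= k -> k < b ->
  exists Mh Kh, 0 <= Kh /\ forall x y, Rabs (x - b) <= k -> Rabs (y - b) <= k ->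
     Rabs (hh g x) <= Mh /\ Rabs (hh g x - hh g y) <= Kh * Rabs (x - y).
Proof.
  intros HG b k Hk Hkb.
  set (K := Rmax (Rabs (Derive (hh g) (b - k))) (Rabs (Derive (hh g) (b + k)))).
  assert (HK : 0 <= K) by (unfold K; eapply Rle_trans; [apply Rabs_pos|apply Rmax_l]).
  exists (Rabs (hh g b) + K * k), K. split; auto.
  intros x y Hx Hy.
  assert (Hx' : b - k <= x <= b + k) by (unfold Rabs in Hx; destruct Rcase_abs; lra).
  assert (Hy' : b - k <= y <= b + k) by (unfold Rabs in Hy; destruct Rcase_abs; lra).
  split.
  - pose proof (hh_lip g HG (b - k) (b + k) ltac:(lra) x b Hx' ltac:(lra)).
    pose proof (Rabs_triang (hh g x - hh g b) (hh g b)).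
    replace (hh g x - hh g b + hh g b) with (hh g x) in H0 by ring.
    assert (K * Rabs (x - b) <= K * k) by (apply Rmult_le_compat_l; auto). fold K in H. lra.
  - apply (hh_lip g HG (b - k) (b + k)); auto; lra.
Qed.

Lemma abs_box p a k : Rabs (p - a) <= k -> a - k <= p <= a + k.
Proof. unfold Rabs. destruct Rcase_abs; lra. Qed.

Lemma toy_box g beta a0 b0 : condG g -> Rabs a0 < 1 -> 0 < b0 ->
  exists k, 0 < k /\ (forall p q, Rabs (p - a0) <= k -> Rabs (q - b0) <= k -> -1 < p < 1 /\ 0 < q) /\
  exists M L, 0 <= M /\ 0 <= L /\ boxF (toyF g beta) a0 b0 k M L /\ boxF (fun p q => p) a0 b0 k M L.
Proof.
  intros HG Ha Hb.
  set (k := Rmin ((1 - Rabs a0)/2) (b0/2)).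
  assert (Hk : 0 < k) by (apply Rmin_pos; lra).
  assert (Hk1 : k <= (1 - Rabs a0)/2) by apply Rmin_l.
  assert (Hk2 : k <= b0/2) by apply Rmin_r.
  assert (Ha0 : - Rabs a0 <= a0 <= Rabs a0) by (unfold Rabs; destruct Rcase_abs; lra).
  assert (Reg : forall p q, Rabs (p - a0) <= k -> Rabs (q - b0) <= k -> Rabs p <= (1 + Rabs a0)/2 /\ b0/2 <= q).
  { intros p q Hp Hq. apply abs_box in Hp. apply abs_box in Hq. split; [|lra].
    apply Rabs_le; split; lra. }
  exists k. split; auto. split.
  { intros p q Hp Hq. destruct (Reg p q Hp Hq) as [H1 H2].
    split; [|lra]. assert (Hp1 : Rabs p < 1) by lra. apply Rabs_def2 in Hp1. lra. }
  set (c1 := 1 - ((1 + Rabs a0)/2)^2).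
  assert (Hc1 : 0 < c1).
  { unfold c1. pose proof (Rabs_pos a0). nra. }
  assert (S1 : LBx (fun p q => 1 - p^2) a0 b0 k).
  { eapply LB_ext; [|apply LB_plus; [apply (LB_const 1)|apply LB_mult; [apply (LB_const (-1))|apply LB_mult; apply LB_p; lra]]].
    intros; simpl; ring. }
  assert (S2 : LBx (fun p q => sqrt (1 - p^2)) a0 b0 k).
  { apply (LB_sqrt _ _ _ _ c1); auto. intros p q Hp Hq. destruct (Reg p q Hp Hq) as [H1 _].
    unfold c1. pose proof (Rabs_pos p).
    assert (p^2 = Rabs p ^ 2) by (rewrite <- Rsqr_pow2, <- Rsqr_pow2, Rsqr_abs; auto).
    rewrite H0. apply Rplus_le_compat_l, Ropp_le_contravar. apply pow_incr. lra. }
  assert (S3 : LBx (fun p q => / q) a0 b0 k).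
  { apply (LB_inv _ _ _ _ (b0/2)). lra.
    intros p q Hp Hq. destruct (Reg p q Hp Hq) as [_ H2]. rewrite Rabs_right; lra.
    apply LB_q; lra. }
  assert (S4 : LBx (fun p q => beta * hh g q + p) a0 b0 k).
  { apply LB_plus; [apply LB_mult; [apply LB_const|]|apply LB_p; lra].
    apply LB_compq. lra. apply hh_box; auto; lra. }
  assert (S5 : LBx (toyF g beta) a0 b0 k).
  { eapply LB_ext; [|apply LB_mult; [apply LB_mult; [apply LB_mult; [apply (LB_const (3/2)) | apply S1] | apply S3]
        | apply LB_plus; [apply (LB_const (-1)) | apply LB_mult; [apply LB_mult; [apply S2 | apply S4] | apply S3]]]].
    intros p q _ _. cbv beta. unfold toyF, hh, Rdiv. ring. }
  destruct S5 as (M1 & L1 & HM1 & HL1 & B1).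
  destruct (LB_p a0 b0 k ltac:(lra)) as (M2 & L2 & HM2 & HL2 & B2).
  exists (Rmax M1 M2), (Rmax L1 L2). split; [eapply Rle_trans; [apply HM1|apply Rmax_l]|].
  split; [eapply Rle_trans; [apply HL1|apply Rmax_l]|].
  split.
  - apply (boxF_mono _ _ _ _ M1 L1); auto; apply Rmax_l.
  - apply (boxF_mono _ _ _ _ M2 L2); auto; apply Rmax_r.
Qed.

Lemma cont_of_deriv f x l : derivable_pt_lim f x l ->
  forall eps, 0 < eps -> exists d, 0 < d /\ forall y, Rabs (y - x) < d -> Rabs (f y - f x) < eps.
Proof.
  intros Hf eps Heps.
  assert (Hc : continuity_pt f x) by (apply derivable_continuous_pt; exists l; auto).
  destruct (Hc eps Heps) as (d & Hd & H). exists d. split; auto. intros y Hy.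
  destruct (Req_dec y x) as [E|Ne].
  - subst. unfold Rminus. rewrite Rplus_opp_r, Rabs_R0. auto.
  - apply (H y). split; auto. unfold D_x, no_cond. split; auto.
Qed.

Lemma lub_ex (f : R -> R) (Dm : R -> Prop) hi x0 : Dm x0 -> (forall s, Dm s -> f s <= hi) ->
  exists l, l <= hi /\ (forall s, Dm s -> f s <= l) /\
    (forall eps, 0 < eps -> exists s, Dm s /\ l - eps < f s).
Proof.
  intros H0 Hb.
  destruct (completeness (fun x => exists s, Dm s /\ x = f s)) as [l [Hl1 Hl2]].
  - exists hi. intros x (s & Hs & ->). auto.
  - exists (f x0). eauto.
  - exists l. split; [|split].
    + apply Hl2. intros x (s & Hs & ->). auto.
    + intros s Hs. apply Hl1. eauto.
    + intros eps Heps. apply Classical_Prop.NNPP. intros Hn.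
      assert (l <= l - eps); [|lra]. apply Hl2. intros x (s & Hs & ->).
      destruct (Rle_dec (f s) (l - eps)); auto. exfalso. apply Hn. exists s. split; auto. lra.
Qed.

Lemma glb_ex (f : R -> R) (Dm : R -> Prop) lo x0 : Dm x0 -> (forall s, Dm s -> lo <= f s) ->
  exists l, lo <= l /\ (forall s, Dm s -> l <= f s) /\
    (forall eps, 0 < eps -> exists s, Dm s /\ f s < l + eps).
Proof.
  intros H0 Hb. destruct (lub_ex (fun s => - f s) Dm (- lo) x0 H0) as (l & H1 & H2 & H3).
  { intros s Hs. specialize (Hb s Hs). lra. }
  exists (- l). split; [lra|split].
  - intros s Hs. specialize (H2 s Hs). lra.
  - intros eps He. destruct (H3 eps He) as (s & Hs & Hf). exists s. split; auto. lra.
Qed.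

Lemma est_deriv f x l : (forall eps, 0 < eps -> exists d, 0 < d /\ forall h, h <> 0 -> Rabs h < d ->
  Rabs (f (x + h) - f x - h * l) <= eps * Rabs h) -> derivable_pt_lim f x l.
Proof.
  intros H eps Heps. destruct (H (eps/2) ltac:(lra)) as (d & Hd & Hh).
  exists (mkposreal d Hd). intros h Hh0 Hhd. simpl in Hhd.
  specialize (Hh h Hh0 Hhd).
  replace ((f (x + h) - f x) / h - l) with ((f (x + h) - f x - h * l) / h) by (field; auto).
  unfold Rdiv. rewrite Rabs_mult, Rabs_inv.
  pose proof (Rabs_pos_lt h Hh0).
  apply Rle_lt_trans with (eps / 2 * Rabs h * / Rabs h).
  - apply Rmult_le_compat_r; auto. apply Rlt_le, Rinv_0_lt_compat; auto.
  - field_simplify; lra.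
Qed.

Lemma quad_to_eps K h eps : 0 <= K -> 0 < eps -> Rabs h < eps / (K + 1) -> K * h^2 <= eps * Rabs h.
Proof.
  intros HK He Hh. rewrite <- (pow2_abs h).
  pose proof (Rabs_pos h).
  assert (Rabs h * (K + 1) < eps).
  { apply Rmult_lt_reg_r with (/ (K + 1)). apply Rinv_0_lt_compat; lra.
    rewrite Rmult_assoc, Rinv_r, Rmult_1_r by lra. auto. }
  nra.
Qed.

Lemma left_est (f df : R -> R) m fm dm : 0 < m ->
  (forall c, 0 < c < m -> derivable_pt_lim f c (df c)) ->
  (forall eps, 0 < eps -> exists d, 0 < d /\ forall s, m - d < s < m -> Rabs (f s - fm) < eps) ->
  (forall eps, 0 < eps -> exists d, 0 < d /\ forall s, m - d < s < m -> Rabs (df s - dm) < eps) ->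
  forall eps, 0 < eps -> exists d, 0 < d /\ forall h, - d < h < 0 ->
    Rabs (f (m + h) - fm - h * dm) <= eps * Rabs h.
Proof.
  intros Hm Hd Hf Hdf eps Heps. destruct (Hdf eps Heps) as (d1 & Hd1 & H1).
  exists (Rmin d1 m). split. apply Rmin_pos; auto.
  intros h Hh. pose proof (Rmin_l d1 m). pose proof (Rmin_r d1 m).
  set (s := m + h).
  assert (Hu : forall u, s < u < m -> Rabs (f u - f s - (u - s) * dm) <= eps * (m - s)).
  { intros u Hu. destruct (MVT_cor2 f df s u ltac:(lra)) as (c & Hc1 & Hc2).
    { intros c Hc. apply Hd. unfold s in *; lra. }
    rewrite Hc1. replace (df c * (u - s) - (u - s) * dm) with ((df c - dm) * (u - s)) by ring.
    rewrite Rabs_mult, (Rabs_right (u - s)) by lra.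
    assert (Rabs (df c - dm) < eps) by (apply H1; unfold s in *; lra).
    apply Rle_trans with (eps * (u - s)). apply Rmult_le_compat_r; lra.
    apply Rmult_le_compat_l; lra. }
  rewrite (Rabs_left h) by lra.
  replace (f s - fm - h * dm) with (- (fm - f s - (m - s) * dm)) by (unfold s; ring).
  rewrite Rabs_Ropp. replace (- h) with (m - s) by (unfold s; ring).
  destruct (Rle_dec (Rabs (fm - f s - (m - s) * dm)) (eps * (m - s))) as [ok|ko]; auto.
  exfalso. set (e2 := Rabs (fm - f s - (m - s) * dm) - eps * (m - s)).
  assert (He2 : 0 < e2) by (unfold e2; lra).
  destruct (Hf (e2 / 2) ltac:(lra)) as (d2 & Hd2 & H2).
  set (u := Rmax (m - Rmin d2 (e2 / (2 * (Rabs dm + 1)))/2) ((s + m)/2)).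
  assert (Hmin : 0 < Rmin d2 (e2 / (2 * (Rabs dm + 1)))).
  { apply Rmin_pos; auto. apply Rdiv_lt_0_compat; auto. pose proof (Rabs_pos dm); lra. }
  assert (Hu1 : s < u < m).
  { unfold u. split. eapply Rlt_le_trans; [|apply Rmax_r]. unfold s; lra.
    unfold Rmax. destruct Rle_dec; unfold s in *; lra. }
  assert (Hu2 : m - u < Rmin d2 (e2 / (2 * (Rabs dm + 1)))).
  { unfold u. pose proof (Rmax_l (m - Rmin d2 (e2 / (2 * (Rabs dm + 1))) / 2) ((s + m) / 2)). lra. }
  pose proof (Hu u Hu1).
  assert (Rabs (f u - fm) < e2 / 2).
  { apply H2. split; [|lra]. pose proof (Rmin_l d2 (e2 / (2 * (Rabs dm + 1)))). lra. }
  assert (Rabs ((m - u) * dm) <= e2 / 2).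
  { rewrite Rabs_mult, Rabs_right by lra.
    pose proof (Rmin_r d2 (e2 / (2 * (Rabs dm + 1)))).
    assert (Hx : (m - u) * (Rabs dm + 1) <= e2 / 2).
    { apply Rle_trans with (e2 / (2 * (Rabs dm + 1)) * (Rabs dm + 1)).
      apply Rmult_le_compat_r. pose proof (Rabs_pos dm); lra. lra.
      right. field. pose proof (Rabs_pos dm); lra. }
    pose proof (Rabs_pos dm). nra. }
  pose proof (Rabs_triang (f u - f s - (u - s) * dm) ((fm - f u) - (m - u) * dm)).
  replace (f u - f s - (u - s) * dm + (fm - f u - (m - u) * dm)) with (fm - f s - (m - s) * dm) in H6 by ring.
  pose proof (Rabs_triang (fm - f u) (- ((m - u) * dm))).
  rewrite Rabs_Ropp in H7. rewrite Rabs_minus_sym in H4.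
  replace (fm - f u + - ((m - u) * dm)) with (fm - f u - (m - u) * dm) in H7 by ring.
  unfold e2 in *. lra.
Qed.

Lemma Fs_cont g beta rho r smax : condG g -> toy_solution g beta rho r smax ->
  forall s, in_dom smax s -> forall eps, 0 < eps -> exists d, 0 < d /\ forall u, Rabs (u - s) < d ->
    Rabs (toyF g beta (rho u) (r u) - toyF g beta (rho s) (r s)) < eps.
Proof.
  intros HG Hsol s Hs eps Heps. destruct (Hsol s Hs) as (Hr1 & Hr2 & Hd1 & Hd2).
  destruct (toy_box g beta (rho s) (r s) HG ltac:(apply Rabs_def1; lra) Hr2)
    as (k & Hk & _ & M & L & HM & HL & B1 & _).
  set (e := Rmin k (eps / (L + 1))).
  assert (He : 0 < e) by (apply Rmin_pos; auto; apply Rdiv_lt_0_compat; lra).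
  destruct (cont_of_deriv _ _ _ Hd1 e He) as (d1 & Hd1p & C1).
  destruct (cont_of_deriv _ _ _ Hd2 e He) as (d2 & Hd2p & C2).
  exists (Rmin d1 d2). split. apply Rmin_pos; auto.
  intros u Hu. pose proof (Rmin_l d1 d2). pose proof (Rmin_r d1 d2).
  assert (Rabs (rho u - rho s) < e) by (apply C1; eapply Rlt_le_trans; eauto). assert (Rabs (r u - r s) < e) by (apply C2; eapply Rlt_le_trans; eauto).
  pose proof (Rmin_l k (eps / (L + 1))). pose proof (Rmin_r k (eps / (L + 1))). fold e in H3, H4.
  assert (Z : Rabs (rho s - rho s) <= k /\ Rabs (r s - r s) <= k).
  { unfold Rminus. rewrite !Rplus_opp_r, Rabs_R0. lra. }
  assert (Z1 : Rabs (rho u - rho s) <= k) by lra. assert (Z2 : Rabs (r u - r s) <= k) by lra.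
  destruct (B1 (rho u) (r u) (rho s) (r s) Z1 Z2 (proj1 Z) (proj2 Z)) as [_ X].
  eapply Rle_lt_trans. apply X.
  assert (Rmax (Rabs (rho u - rho s)) (Rabs (r u - r s)) < eps / (L + 1)).
  { apply Rmax_lub_lt; lra. }
  apply Rle_lt_trans with (L * (eps / (L + 1))).
  apply Rmult_le_compat_l; lra.
  apply Rmult_lt_reg_r with (L + 1). lra. field_simplify; nra.
Qed.

Lemma deriv_val g beta rho r smax : toy_solution g beta rho r smax -> forall s, in_dom smax s ->
  forall l, derivable_pt_lim rho s l -> l = toyF g beta (rho s) (r s).
Proof.
  intros Hsol s Hs l Hl. destruct (Hsol s Hs) as (_ & _ & Hd & _). eapply uniqueness_limite; eauto.
Qed.

Lemma all_good g beta rho r smax : condG g -> toy_solution g beta rho r smax ->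
  (exists s0, in_dom smax s0 /\ forall s, 0 < s < s0 ->
      (exists l, derivable_pt_lim rho s l /\ l < 0) /\ 0 < rho s) ->
  ~ A_cond rho smax -> ~ B_cond rho smax ->
  forall s, in_dom smax s -> toyF g beta (rho s) (r s) < 0 /\ 0 < rho s.
Proof.
  intros HG Hsol (sa & Hsa & Htip) HnA HnB.
  set (Good := fun s => toyF g beta (rho s) (r s) < 0 /\ 0 < rho s).
  assert (Hdom : forall s t, in_dom smax t -> 0 < s <= t -> in_dom smax s).
  { intros s t [Ht1 Ht2] Hs. split; [lra|]. destruct smax; auto; lra. }
  assert (Tip : forall s, 0 < s < sa -> Good s).
  { intros s Hs. destruct (Htip s Hs) as ((l & Hl & Hl0) & Hr). split; auto.
    rewrite <- (deriv_val g beta rho r smax Hsol s (Hdom s sa Hsa ltac:(lra)) l Hl). auto. }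
  intros sb Hsb. apply Classical_Prop.NNPP. intros Hbad. fold (Good sb) in Hbad.
  assert (Hsa0 : 0 < sa) by (destruct Hsa; auto).
  assert (Hsb0 : 0 < sb) by (destruct Hsb; auto).
  set (E := fun t => 0 < t <= sb /\ forall s, 0 < s < t -> Good s).
  destruct (lub_ex (fun t => t) E sb (Rmin sa sb)) as (ss & Hss1 & Hss2 & Hss3).
  { split. split. apply Rmin_pos; auto. apply Rmin_r. intros s Hs. apply Tip.
    pose proof (Rmin_l sa sb). lra. }
  { intros s [Hs _]. lra. }
  assert (Hss0 : Rmin sa sb <= ss).
  { apply Hss2. split. split. apply Rmin_pos; auto. apply Rmin_r. intros s Hs. apply Tip.
    pose proof (Rmin_l sa sb). lra. }
  pose proof (Rmin_pos sa sb Hsa0 Hsb0).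
  assert (Gbelow : forall s, 0 < s < ss -> Good s).
  { intros s Hs. destruct (Hss3 (ss - s) ltac:(lra)) as (t & [Ht1 Ht2] & Ht). apply Ht2. lra. }
  assert (Hssd : in_dom smax ss) by (apply (Hdom ss sb); auto; lra).
  destruct (Hsol ss Hssd) as (_ & _ & Hdr & _).
  assert (Hr0 : 0 <= rho ss).
  { destruct (Rle_dec 0 (rho ss)) as [ok|ko]; auto. exfalso.
    destruct (cont_of_deriv _ _ _ Hdr (- rho ss) ltac:(lra)) as (d & Hd & C).
    set (u := ss - Rmin (d/2) (ss/2)).
    assert (0 < Rmin (d/2) (ss/2)) by (apply Rmin_pos; lra).
    pose proof (Rmin_l (d/2) (ss/2)). pose proof (Rmin_r (d/2) (ss/2)).
    assert (Gu : Good u) by (apply Gbelow; unfold u; lra).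
    specialize (C u ltac:(unfold u; rewrite Rabs_left; lra)).
    destruct Gu. apply Rabs_def2 in C. lra. }
  assert (Hr1 : 0 < rho ss).
  { destruct Hr0 as [|E0]; auto. exfalso. apply HnA. exists ss. split; auto. split.
    - intros s Hs. exists (toyF g beta (rho s) (r s)). split.
      + apply (Hsol s (Hdom s ss Hssd ltac:(lra))).
      + destruct (Gbelow s Hs). nra.
    - auto. }
  assert (Hf : toyF g beta (rho ss) (r ss) < 0).
  { destruct (Rtotal_order (toyF g beta (rho ss) (r ss)) 0) as [H0|[H0|H0]]; auto; exfalso.
    - apply HnB. exists ss. split; auto. split.
      + intros s Hs. exists (toyF g beta (rho s) (r s)). split.
        * apply (Hsol s (Hdom s ss Hssd ltac:(lra))).
        * destruct (Gbelow s Hs). nra.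
      + rewrite <- H0. auto.
    - destruct (Fs_cont g beta rho r smax HG Hsol ss Hssd _ H0) as (d & Hd & C).
      set (u := ss - Rmin (d/2) (ss/2)).
      assert (0 < Rmin (d/2) (ss/2)) by (apply Rmin_pos; lra).
      pose proof (Rmin_l (d/2) (ss/2)). pose proof (Rmin_r (d/2) (ss/2)).
      assert (Gu : Good u) by (apply Gbelow; unfold u; lra).
      specialize (C u ltac:(unfold u; rewrite Rabs_left; lra)).
      destruct Gu. apply Rabs_def2 in C. lra. }
  destruct (Req_dec ss sb) as [Eq|Ne].
  { apply Hbad. rewrite <- Eq. split; auto. }
  destruct (Fs_cont g beta rho r smax HG Hsol ss Hssd _ (Ropp_0_gt_lt_contravar _ Hf)) as (d1 & Hd1 & C1).
  destruct (cont_of_deriv _ _ _ Hdr (rho ss) Hr1) as (d2 & Hd2 & C2).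
  set (t := Rmin (ss + Rmin d1 d2 / 2) sb).
  pose proof (Rmin_pos d1 d2 Hd1 Hd2) as M0. pose proof (Rmin_l d1 d2) as M1. pose proof (Rmin_r d1 d2) as M2.
  pose proof (Rmin_l (ss + Rmin d1 d2 / 2) sb) as T1. pose proof (Rmin_r (ss + Rmin d1 d2 / 2) sb) as T2.
  fold t in T1, T2.
  assert (Ht : E t).
  { split. split; [unfold t; apply Rmin_pos; lra|auto].
    intros s Hs. destruct (Rlt_dec s ss) as [Hl|Hl]. apply Gbelow; lra.
    assert (Hsd : Rabs (s - ss) < Rmin d1 d2) by (apply Rabs_def1; lra).
    assert (X1 : Rabs (s - ss) < d1) by lra. assert (X2 : Rabs (s - ss) < d2) by lra.
    specialize (C1 s X1). specialize (C2 s X2).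
    apply Rabs_def2 in C1. apply Rabs_def2 in C2. split; lra. }
  specialize (Hss2 t Ht).
  assert (ss < t).
  { assert (Hlt : ss < sb) by (destruct Hss1; [auto|contradiction]). unfold t. apply Rmin_glb_lt; lra. }
  lra.
Qed.

Definition glued (f P : R -> R) (m : R) := fun s => if Rlt_dec s m then f s else P (s - m).

Lemma glue (f df P dP : R -> R) m d fm K : 0 < m -> 0 < d -> 0 <= K ->
  (forall c, 0 < c < m -> derivable_pt_lim f c (df c)) ->
  (forall eps, 0 < eps -> exists d, 0 < d /\ forall h, - d < h < 0 ->
    Rabs (f (m + h) - fm - h * dP 0) <= eps * Rabs h) ->
  P 0 = fm ->
  (forall x y, 0 <= x <= d -> 0 <= y <= d -> Rabs (P y - P x - (y - x) * dP x) <= K * (y - x)^2) ->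
  forall s, 0 < s < m + d ->
    derivable_pt_lim (glued f P m) s (if Rlt_dec s m then df s else dP (s - m)).
Proof.
  intros Hm Hd HK Hf Hleft HP0 HPq s Hs.
  destruct (Rlt_dec s m) as [Hsm|Hsm].
  - apply (deriv_loc f). apply Hf; lra.
    exists (Rmin s (m - s)). split. apply Rmin_pos; lra.
    intros y Hy. unfold glued. destruct (Rlt_dec y m) as [|Hn]; auto.
    exfalso. pose proof (Rmin_r s (m - s)). apply Rabs_def2 in Hy. lra.
  - destruct (Req_dec s m) as [Esm|Nsm].
    + subst s. replace (m - m) with 0 by ring. apply est_deriv. intros eps Heps.
      destruct (Hleft eps Heps) as (d1 & Hd1 & H1).
      assert (Hq : 0 < eps / (K + 1)) by (apply Rdiv_lt_0_compat; lra).
      exists (Rmin d1 (Rmin d (eps / (K + 1)))). split.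
      { apply Rmin_pos; auto. apply Rmin_pos; auto. }
      intros h Hh0 Hh. pose proof (Rmin_l d1 (Rmin d (eps / (K + 1)))).
      pose proof (Rmin_r d1 (Rmin d (eps / (K + 1)))).
      pose proof (Rmin_l d (eps / (K + 1))). pose proof (Rmin_r d (eps / (K + 1))).
      apply Rabs_def2 in Hh as Hh'.
      unfold glued. destruct (Rlt_dec m m) as [X|_]; [lra|].
      replace (m - m) with 0 by ring. rewrite HP0.
      destruct (Rlt_dec (m + h) m) as [Hl|Hr].
      * apply H1. lra.
      * replace (m + h - m) with h by ring.
        assert (h > 0) by (destruct (Rtotal_order h 0) as [|[|]]; lra).
        specialize (HPq 0 h ltac:(lra) ltac:(lra)). rewrite HP0 in HPq.
        replace (h - 0) with h in HPq by ring.
        eapply Rle_trans. apply HPq. apply quad_to_eps; auto. lra.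
    + assert (Hsm' : m < s) by lra.
      apply est_deriv. intros eps Heps.
      assert (Hq : 0 < eps / (K + 1)) by (apply Rdiv_lt_0_compat; lra).
      set (e := Rmin (s - m) (Rmin (m + d - s) (eps / (K + 1)))).
      assert (He : 0 < e) by (unfold e; apply Rmin_pos; [lra|apply Rmin_pos; lra]).
      exists e. split; auto. intros h Hh0 Hh.
      pose proof (Rmin_l (s - m) (Rmin (m + d - s) (eps / (K + 1)))).
      pose proof (Rmin_r (s - m) (Rmin (m + d - s) (eps / (K + 1)))).
      pose proof (Rmin_l (m + d - s) (eps / (K + 1))). pose proof (Rmin_r (m + d - s) (eps / (K + 1))).
      fold e in H, H0. apply Rabs_def2 in Hh as Hh'.
      unfold glued. destruct (Rlt_dec s m) as [X|_]; [lra|].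
      destruct (Rlt_dec (s + h) m) as [X|_]; [lra|].
      specialize (HPq (s - m) (s + h - m) ltac:(lra) ltac:(lra)).
      replace (s + h - m - (s - m)) with h in HPq by ring.
      eapply Rle_trans. apply HPq. apply quad_to_eps; auto. lra.
Qed.

Lemma lim0_ext f f' L : lim_0plus f L -> (exists e, 0 < e /\ forall s, 0 < s < e -> f' s = f s) ->
  lim_0plus f' L.
Proof.
  intros Hf (e & He & Hee) eps Heps. destruct (Hf eps Heps) as (d & Hd & H).
  exists (Rmin d e). split. apply Rmin_pos; auto.
  intros s Hs. pose proof (Rmin_l d e). pose proof (Rmin_r d e).
  rewrite Hee by lra. apply H. lra.
Qed.

Lemma mvt_eq f df x y : x < y -> (forall c, x <= c <= y -> derivable_pt_lim f c (df c)) ->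
  exists c, x < c < y /\ f y - f x = df c * (y - x).
Proof. intros Hxy Hd. destruct (MVT_cor2 f df x y Hxy Hd) as (c & H1 & H2). eauto. Qed.

Lemma toyF_cont g beta a0 b0 : condG g -> Rabs a0 < 1 -> 0 < b0 ->
  forall eps, 0 < eps -> exists e, 0 < e /\ forall p q, Rabs (p - a0) < e -> Rabs (q - b0) < e ->
    Rabs (toyF g beta p q - toyF g beta a0 b0) < eps.
Proof.
  intros HG Ha Hb eps Heps.
  destruct (toy_box g beta a0 b0 HG Ha Hb) as (k & Hk & _ & M & L & HM & HL & B1 & _).
  exists (Rmin k (eps / (L + 1))). split.
  { apply Rmin_pos; auto. apply Rdiv_lt_0_compat; lra. }
  intros p q Hp Hq.
  pose proof (Rmin_l k (eps / (L + 1))). pose proof (Rmin_r k (eps / (L + 1))).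
  assert (Z : Rabs (a0 - a0) <= k /\ Rabs (b0 - b0) <= k).
  { unfold Rminus. rewrite !Rplus_opp_r, Rabs_R0. lra. }
  assert (Z1 : Rabs (p - a0) <= k) by lra. assert (Z2 : Rabs (q - b0) <= k) by lra.
  destruct (B1 p q a0 b0 Z1 Z2 (proj1 Z) (proj2 Z)) as [_ X].
  eapply Rle_lt_trans. apply X.
  assert (Rmax (Rabs (p - a0)) (Rabs (q - b0)) < eps / (L + 1)).
  { apply Rmax_lub_lt; lra. }
  apply Rle_lt_trans with (L * (eps / (L + 1))).
  apply Rmult_le_compat_l; lra.
  apply Rmult_lt_reg_r with (L + 1). lra. field_simplify; nra.
Qed.

Lemma no_finite g beta rho r m : condG g ->
  maximal_toy_tip_solution g beta rho r (Some m) ->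
  (forall s, in_dom (Some m) s -> toyF g beta (rho s) (r s) < 0 /\ 0 < rho s) -> False.
Proof.
  intros HG ((Hsol & HS1 & HS2 & (sa & Hsa & Htip)) & Hmax) Good.
  assert (Dm : forall s, in_dom (Some m) s <-> 0 < s < m) by (intros; unfold in_dom; simpl; tauto).
  assert (Hm : 0 < m) by (pose proof (proj1 (Dm sa) Hsa); lra).
  set (Fs := fun s => toyF g beta (rho s) (r s)).
  assert (Drho : forall c, 0 < c < m -> derivable_pt_lim rho c (Fs c)).
  { intros c Hc. apply (Hsol c (proj2 (Dm c) Hc)). }
  assert (Dr : forall c, 0 < c < m -> derivable_pt_lim r c (rho c)).
  { intros c Hc. apply (Hsol c (proj2 (Dm c) Hc)). }
  assert (Bnd : forall c, 0 < c < m -> -1 < rho c < 1 /\ 0 < r c).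
  { intros c Hc. destruct (Hsol c (proj2 (Dm c) Hc)) as (A1 & A2 & _). auto. }
  assert (Gd : forall c, 0 < c < m -> Fs c < 0 /\ 0 < rho c).
  { intros c Hc. apply (Good c (proj2 (Dm c) Hc)). }
  assert (Dec : forall x y, 0 < x -> x < y -> y < m -> rho y < rho x).
  { intros x y Hx Hxy Hy. destruct (mvt_eq rho Fs x y Hxy) as (c & Hc & E).
    { intros c Hc. apply Drho; lra. }
    destruct (Gd c ltac:(lra)). nra. }
  assert (Inc : forall x y, 0 < x -> x < y -> y < m -> 0 < r y - r x <= y - x).
  { intros x y Hx Hxy Hy. destruct (mvt_eq r rho x y Hxy) as (c & Hc & E).
    { intros c Hc. apply Dr; lra. }
    destruct (Gd c ltac:(lra)). destruct (Bnd c ltac:(lra)). rewrite E. split; nra. }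
  destruct (glb_ex rho (fun s => 0 < s < m) 0 (m/2)) as (rm & Hrm0 & Hrm1 & Hrm2).
  { lra. } { intros s Hs. destruct (Gd s Hs); lra. }
  assert (Lrho : forall eps, 0 < eps -> exists d, 0 < d /\ forall s, m - d < s < m -> Rabs (rho s - rm) < eps).
  { intros eps He. destruct (Hrm2 eps He) as (s1 & Hs1 & Hr1). exists (m - s1). split; [lra|].
    intros s Hs. pose proof (Hrm1 s ltac:(lra)).
    assert (rho s <= rho s1). { destruct (Req_dec s s1). subst; lra. left; apply Dec; lra. }
    apply Rabs_def1; lra. }
  destruct (lub_ex r (fun s => 0 < s < m) (r (m/2) + m) (m/2)) as (qm & Hqm0 & Hqm1 & Hqm2).
  { lra. }
  { intros s Hs. destruct (Rlt_le_dec (m/2) s) as [Hl|Hl].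
    - pose proof (Inc (m/2) s ltac:(lra) Hl ltac:(lra)). lra.
    - destruct (Req_dec s (m/2)). subst; lra. pose proof (Inc s (m/2) ltac:(lra) ltac:(lra) ltac:(lra)). lra. }
  assert (Lr : forall eps, 0 < eps -> exists d, 0 < d /\ forall s, m - d < s < m -> Rabs (r s - qm) < eps).
  { intros eps He. destruct (Hqm2 eps He) as (s1 & Hs1 & Hr1). exists (m - s1). split; [lra|].
    intros s Hs. pose proof (Hqm1 s ltac:(lra)).
    assert (r s1 <= r s). { destruct (Req_dec s s1). subst; lra. pose proof (Inc s1 s ltac:(lra) ltac:(lra) ltac:(lra)). lra. }
    apply Rabs_def1; lra. }
  assert (Hrm_lt1 : rm < 1) by (pose proof (Hrm1 (m/2) ltac:(lra)); destruct (Bnd (m/2) ltac:(lra)); lra).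
  assert (Hqm_pos : 0 < qm) by (pose proof (Hqm1 (m/2) ltac:(lra)); destruct (Bnd (m/2) ltac:(lra)); lra).
  assert (Habs : Rabs rm < 1) by (apply Rabs_def1; lra).
  assert (LF : forall eps, 0 < eps -> exists d, 0 < d /\ forall s, m - d < s < m -> Rabs (Fs s - toyF g beta rm qm) < eps).
  { intros eps He. destruct (toyF_cont g beta rm qm HG Habs Hqm_pos eps He) as (e & He0 & Hc).
    destruct (Lrho e He0) as (d1 & Hd1 & H1). destruct (Lr e He0) as (d2 & Hd2 & H2).
    exists (Rmin d1 d2). split. apply Rmin_pos; auto. intros s Hs.
    pose proof (Rmin_l d1 d2). pose proof (Rmin_r d1 d2). apply Hc.
    apply H1; lra. apply H2; lra. }
  destruct (toy_box g beta rm qm HG Habs Hqm_pos) as (k & Hk & Reg & M & L & HM & HL & B1 & B2).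
  set (d := Rmin (k / (M + 1)) (/ (2 * (L + 1)))).
  assert (Hd : 0 < d) by (apply Rmin_pos; apply Rdiv_lt_0_compat || apply Rinv_0_lt_compat; lra).
  assert (HMd : M * d <= k).
  { apply Rle_trans with (M * (k / (M + 1))). apply Rmult_le_compat_l; auto. apply Rmin_l.
    apply Rle_trans with ((M + 1) * (k / (M + 1))). apply Rmult_le_compat_r. apply Rlt_le, Rdiv_lt_0_compat; lra. lra.
    right. field. lra. }
  assert (HLd : L * d <= / 2).
  { apply Rle_trans with (L * (/ (2 * (L + 1)))). apply Rmult_le_compat_l; auto. apply Rmin_r.
    apply Rle_trans with ((L + 1) * (/ (2 * (L + 1)))). apply Rmult_le_compat_r. apply Rlt_le, Rinv_0_lt_compat; lra. lra.
    right. field. lra. }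
  destruct (picard (toyF g beta) (fun p q => p) rm qm k M L d HM HL (Rlt_le _ _ Hd) HMd HLd B1 B2 (Rlt_le _ _ Hk))
    as (P & Q & HP0 & HQ0 & HPbox & HPq).
  set (rho2 := glued rho P m). set (r2 := glued r Q m).
  assert (Eq2 : forall s, s < m -> rho2 s = rho s /\ r2 s = r s).
  { intros s Hs. unfold rho2, r2, glued. destruct (Rlt_dec s m); [auto|lra]. }
  assert (Dm2 : forall s, in_dom (Some (m + d)) s <-> 0 < s < m + d) by (intros; unfold in_dom; simpl; tauto).
  assert (Sol2 : toy_solution g beta rho2 r2 (Some (m + d))).
  { intros s Hs0. pose proof (proj1 (Dm2 s) Hs0) as Hs.
    assert (Hval : (if Rlt_dec s m then Fs s else toyF g beta (P (s - m)) (Q (s - m))) =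
                   toyF g beta (rho2 s) (r2 s)).
    { unfold rho2, r2, glued, Fs. destruct (Rlt_dec s m); auto. }
    assert (Hval2 : (if Rlt_dec s m then rho s else P (s - m)) = rho2 s).
    { unfold rho2, glued. destruct (Rlt_dec s m); auto. }
    split; [|split; [|split]].
    - unfold rho2, glued. destruct (Rlt_dec s m) as [Hl|Hl].
      { assert (Hs' : 0 < s < m) by lra. destruct (Bnd s Hs'); auto. }
      destruct (HPbox (s - m)) as [X Y]. destruct (Reg _ _ X Y); auto.
    - unfold r2, glued. destruct (Rlt_dec s m) as [Hl|Hl].
      { assert (Hs' : 0 < s < m) by lra. destruct (Bnd s Hs'); auto. }
      destruct (HPbox (s - m)) as [X Y]. destruct (Reg _ _ X Y); auto.
    - rewrite <- Hval. apply (glue rho Fs P (fun x => toyF g beta (P x) (Q x)) m d rm (L * M)); auto.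
      + apply Rmult_le_pos; auto.
      + apply (left_est rho Fs m rm); auto. rewrite HP0, HQ0. auto.
      + intros x y Hx Hy. apply (HPq x y Hx Hy).
    - rewrite <- Hval2. apply (glue r rho Q P m d qm (L * M)); auto.
      + apply Rmult_le_pos; auto.
      + apply (left_est r rho m qm); auto. rewrite HP0. auto.
      + intros x y Hx Hy. apply (HPq x y Hx Hy). }
  assert (Tip2 : toy_tip_solution g beta rho2 r2 (Some (m + d))).
  { split; [auto|split; [|split]].
    - destruct HS1 as (A1 & A2 & eta & Heta & A3). split; [|split].
      + apply (lim0_ext rho). auto. exists m. split; auto. intros s Hs. apply Eq2; lra.
      + apply (lim0_ext r). auto. exists m. split; auto. intros s Hs. apply Eq2; lra.
      + exists eta. split; auto. apply (lim0_ext (fun s => sqrt (1 - rho s ^ 2) / r s)). auto.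
        exists m. split; auto. intros s Hs. destruct (Eq2 s ltac:(lra)) as [E1 E2]. rewrite E1, E2. auto.
    - destruct HS2 as (s0 & Hs00 & G & HGa & HGp & HGe). pose proof (proj1 (Dm s0) Hs00) as Hs0.
      exists s0. split. apply Dm2; lra.
      destruct (Eq2 s0 ltac:(lra)) as [_ E2]. cbv zeta. rewrite E2.
      exists G. split; auto. split; auto. intros s Hs. destruct (Eq2 s ltac:(lra)) as [E3 E4].
      rewrite E3, E4. apply HGe. auto.
    - pose proof (proj1 (Dm sa) Hsa) as Hsa'. exists sa. split. apply Dm2; lra.
      intros s Hs. destruct (Htip s Hs) as ((l & Hl & Hl0) & Hr).
      destruct (Eq2 s ltac:(lra)) as [E1 _]. rewrite E1. split; auto.
      exists l. split; auto. apply (deriv_loc rho); auto.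
      exists (Rmin s (m - s)). split. apply Rmin_pos; lra.
      intros y Hy. pose proof (Rmin_r s (m - s)). apply Rabs_def2 in Hy. apply Eq2. lra. }
  pose proof (Hmax rho2 r2 (Some (m + d)) Tip2) as Hc.
  assert (Hm2 : in_dom (Some m) m).
  { apply Hc. intros s Hs1. pose proof (proj1 (Dm s) Hs1) as Hs. destruct (Eq2 s ltac:(lra)). split; auto. apply Dm2; lra. apply Dm2; lra. }
  pose proof (proj1 (Dm m) Hm2). lra.
Qed.

Lemma neg_bracket beta rho q G S S0 Cc : 0 < beta -> 0 < rho -> 0 < q -> 0 < G -> 0 < S0 -> S0 <= S ->
  Cc * (beta * S0) = 1 -> Cc < q * G -> 0 < 1 - rho ^ 2 ->
  3 / 2 * (1 - rho ^ 2) / q * (-1 + S * (beta * q ^ 2 * G + rho) / q) < 0 -> False.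
Proof.
  intros Hb Hr Hq HG HS0 HS HC HCq H1 Hneg.
  set (A := 3 / 2 * (1 - rho ^ 2) / q).
  assert (HA : 0 < A) by (unfold A; apply Rdiv_lt_0_compat; lra).
  fold A in Hneg.
  assert (HX : -1 + S * (beta * q ^ 2 * G + rho) / q < 0).
  { destruct (Rlt_dec (-1 + S * (beta * q ^ 2 * G + rho) / q) 0) as [ok|ko]; auto. exfalso.
    assert (0 <= A * (-1 + S * (beta * q ^ 2 * G + rho) / q)) by (apply Rmult_le_pos; lra). lra. }
  assert (HY : S * (beta * q ^ 2 * G + rho) < q).
  { assert (S * (beta * q ^ 2 * G + rho) / q < 1) by lra.
    apply Rmult_lt_reg_r with (/ q). apply Rinv_0_lt_compat; auto.
    rewrite Rinv_r by lra. auto. }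
  assert (H2 : 1 < beta * S0 * q * G).
  { rewrite <- HC. replace (beta * S0 * q * G) with ((q * G) * (beta * S0)) by ring.
    apply Rmult_lt_compat_r. apply Rmult_lt_0_compat; lra. auto. }
  assert (H3 : q < beta * S0 * q ^ 2 * G).
  { replace (beta * S0 * q ^ 2 * G) with (q * (beta * S0 * q * G)) by ring. nra. }
  assert (H4 : beta * S0 * q ^ 2 * G <= S * (beta * q ^ 2 * G + rho)).
  { assert (0 < beta * q ^ 2 * G) by (apply Rmult_lt_0_compat; [apply Rmult_lt_0_compat; [lra|apply pow_lt; lra]|lra]).
    nra. }
  lra.
Qed.

Lemma inf_case g beta rho r : condG g -> 0 < beta -> toy_solution g beta rho r None ->
  (forall s, in_dom None s -> toyF g beta (rho s) (r s) < 0 /\ 0 < rho s) -> S4 rho r.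
Proof.
  intros HG Hb Hsol Good.
  assert (Dm : forall s, in_dom None s <-> 0 < s) by (intros; unfold in_dom; simpl; tauto).
  set (Fs := fun s => toyF g beta (rho s) (r s)).
  assert (Drho : forall c, 0 < c -> derivable_pt_lim rho c (Fs c)).
  { intros c Hc. apply (Hsol c (proj2 (Dm c) Hc)). }
  assert (Dr : forall c, 0 < c -> derivable_pt_lim r c (rho c)).
  { intros c Hc. apply (Hsol c (proj2 (Dm c) Hc)). }
  assert (Bnd : forall c, 0 < c -> -1 < rho c < 1 /\ 0 < r c).
  { intros c Hc. destruct (Hsol c (proj2 (Dm c) Hc)) as (A1 & A2 & _). auto. }
  assert (Gd : forall c, 0 < c -> Fs c < 0 /\ 0 < rho c).
  { intros c Hc. apply (Good c (proj2 (Dm c) Hc)). }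
  assert (Dec : forall x y, 0 < x -> x < y -> rho y < rho x).
  { intros x y Hx Hxy. destruct (mvt_eq rho Fs x y Hxy) as (c & Hc & E).
    { intros c Hc. apply Drho; lra. }
    destruct (Gd c ltac:(lra)). nra. }
  assert (Inc : forall x y, 0 < x -> x < y -> exists c, x < c < y /\ r y - r x = rho c * (y - x)).
  { intros x y Hx Hxy. destruct (mvt_eq r rho x y Hxy) as (c & Hc & E).
    { intros c Hc. apply Dr; lra. }
    exists c. auto. }
  assert (Inc' : forall x y, 0 < x -> x <= y -> r x <= r y).
  { intros x y Hx Hxy. destruct (Req_dec x y). subst; lra.
    destruct (Inc x y Hx ltac:(lra)) as (c & Hc & E). destruct (Gd c ltac:(lra)). nra. }
  destruct (Gd 1 ltac:(lra)) as [_ HP0]. destruct (Bnd 1 ltac:(lra)) as [[_ HP1] Hr1].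
  set (P := rho 1).
  assert (HS0 : 0 < sqrt (1 - P ^ 2)) by (apply sqrt_lt_R0; unfold P; nra).
  set (Cc := / (beta * sqrt (1 - P ^ 2))).
  destruct HG as (G1 & G2 & G3 & G4).
  destruct (G4 Cc) as [V HV].
  assert (RB : forall s, 1 <= s -> r s <= V).
  { intros s Hs. destruct (Rle_dec (r s) V) as [ok|ko]; auto. exfalso.
    specialize (HV (r s) ltac:(lra)).
    destruct (Gd s ltac:(lra)) as [Hneg Hpos]. destruct (Bnd s ltac:(lra)) as [[_ Hr] Hq].
    assert (Hle : rho s <= P).
    { unfold P. destruct (Req_dec s 1). subst; lra. left. apply Dec; lra. }
    apply (neg_bracket beta (rho s) (r s) (g (r s ^ 2)) (sqrt (1 - rho s ^ 2)) (sqrt (1 - P ^ 2)) Cc); auto.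
    - apply G1. apply pow_lt; auto.
    - apply sqrt_le_1_alt. nra.
    - unfold Cc. field. lra.
    - nra. }
  set (B := Rmax V (r 1)).
  assert (RB' : forall s, 0 < s -> r s <= B).
  { intros s Hs. destruct (Rle_dec 1 s).
    - eapply Rle_trans. apply RB; auto. apply Rmax_l.
    - eapply Rle_trans. apply Inc'; [auto|]. instantiate (1 := 1). lra. apply Rmax_r. }
  destruct (glb_ex rho (fun s => 0 < s) 0 1) as (Lr & HL0 & HL1 & HL2).
  { lra. } { intros s Hs. destruct (Gd s Hs); lra. }
  destruct (lub_ex r (fun s => 0 < s) B 1) as (rinf & Hri0 & Hri1 & Hri2).
  { lra. } { auto. }
  assert (HLr : Lr = 0).
  { destruct HL0 as [Hpos|]; auto. exfalso.
    set (s := 2 + (B - r 1) / Lr).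
    assert (HB1 : r 1 <= B) by apply Rmax_r.
    assert (Hs : 1 < s) by (unfold s; assert (0 <= (B - r 1) / Lr) by (apply Rdiv_le_0_compat; lra); lra).
    destruct (Inc 1 s ltac:(lra) Hs) as (c & Hc & E).
    pose proof (HL1 c ltac:(lra)). pose proof (RB' s ltac:(lra)).
    assert (Lr * (s - 1) <= rho c * (s - 1)) by (apply Rmult_le_compat_r; lra).
    assert (Lr * (s - 1) = Lr + (B - r 1)) by (unfold s; field; lra).
    lra. }
  split.
  - intros eps He. destruct (HL2 eps He) as (s1 & Hs1 & Hr). exists s1. intros s Hs.
    pose proof (HL1 s ltac:(lra)). pose proof (Dec s1 s Hs1 Hs). rewrite <- HLr. apply Rabs_def1; lra.
  - exists rinf. split.
    + pose proof (Hri1 1 ltac:(lra)). lra.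
    + intros eps He. destruct (Hri2 eps He) as (s1 & Hs1 & Hr). exists s1. intros s Hs.
      pose proof (Hri1 s ltac:(lra)). pose proof (Inc' s1 s Hs1 ltac:(lra)). apply Rabs_def1; lra.
Qed.

Theorem lemma3p4 (g : R -> R) :
  analytic_on (fun _ => True) g ->
  condG g ->
  (exists beta0, in_X_toy g beta0) ->
  forall beta, in_X_toy g beta ->
  forall rho r smax, maximal_toy_tip_solution g beta rho r smax ->
    toy_steady_tip_growth g beta rho r smax.
Proof.
  intros _ HG _ beta [Hb HX] rho r smax Hmax.
  destruct (HX rho r smax Hmax) as [nA nB].
  pose proof Hmax as ((Hsol & HS1 & HS2 & Htip) & _).
  pose proof (all_good g beta rho r smax HG Hsol Htip nA nB) as Good.
  destruct smax as [m|].
  - exfalso. apply (no_finite g beta rho r m HG Hmax Good).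
  - split; [auto|split; [auto|split; [auto|split]]].
    + split; auto. intros s Hs.
      assert (Hd : in_dom None s) by (unfold in_dom; simpl; auto).
      destruct (Good s Hd). split; auto. exists (toyF g beta (rho s) (r s)). split; auto.
      apply (Hsol s Hd).
    + apply (inf_case g beta rho r HG Hb Hsol Good).
Qed.
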